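(* Let $n\ge1$ and let $\theta_2,\theta_3,\kappa_0,\kappa_1,\ldots,\kappa_n,\rho_1,\ldots,\rho_n$ be complex numbers. Define \[ b_i=-\kappa_i-\rho_1\ (i=1,\ldots,n),\quad b'=-\theta_2,\quad c_1=-\kappa_0-\rho_1+1,\quad c_i=-\rho_1+\rho_i+1\ (i=2,\ldots,n),\quad c'=1-\theta_2-\theta_3 . \] Let $\delta_1=t_1\,\partial/\partial t_1$ and $\delta_2=(t_2-1)\,\partial/\partial t_2$, and let $z=z(t_1,t_2)$ be a (locally holomorphic) solution of \begin{align*} &\Big[t_1(\delta_1+\delta_2+c_1+c'-2)\Big\{\prod_{i=1}^n(\delta_1+b_i)\Big\}-\delta_1\Big\{\prod_{i=1}^n(\delta_1+c_i-1)\Big\}\Big]z=0,\\ &\{(1-t_2)(\delta_1+\delta_2+c_1+c'-2)(\delta_2+b')-\delta_2(\delta_2+c'-1)\}z=0. \end{align*} Set \begin{align*} w_0&=-\Big\{\prod_{j=1}^n(\delta_1+b_j)\Big\}(\delta_2+c'-1)z,\\ w_1&=-b_1(b'-c'+1)\Big\{\prod_{j=2}^n(\delta_1+b_j)\Big\}(\delta_1+c_1-1)z,\\ w_i&=-(b_i-c_i+1)(b'-c'+1)\Big\{\prod_{j=i+1}^n(\delta_1+b_j)\Big\}\Big\{\prod_{j=1}^{i-1}(\delta_1+c_j-1)\Big\}\delta_1z\quad(i=2,\ldots,n),\\ w'_1&=b_1\Big\{\prod_{j=2}^n(\delta_1+b_j)\Big\}(\delta_1+c_1-1)(\delta_2+b')z,\\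 w'_i&=(b_i-c_i+1)\Big\{\prod_{j=i+1}^n(\delta_1+b_j)\Big\}\Big\{\prod_{j=1}^{i-1}(\delta_1+c_j-1)\Big\}\delta_1(\delta_2+b')z\quad(i=2,\ldots,n). \end{align*} Then $\mathbf{w}={}^t[w_0,w_1,\ldots,w_n,w'_1,\ldots,w'_n]$ satisfies the linear Pfaff system \[ d\mathbf{w}=\{A_1^{(1)}d\log(t_1-1)+A_0^{(1)}d\log t_1+A_td\log(t_1-t_2)+A_1^{(2)}d\log(t_2-1)+A_0^{(2)}d\log t_2\}\mathbf{w}, \] where, indexing rows and columns by $0,1,\ldots,2n$ (index $i\in\{1,\dots,n\}$ corresponding to $w_i$ and index $n+i$ to $w'_i$) and letting $E_{i,j}$ denote the $(2n+1)\times(2n+1)$ matrix with $1$ in entry $(i,j)$ and $0$ elsewhere, \begin{align*} A_1^{(1)}&=\theta_3E_{0,0}+\sum_{j=1}^nE_{0,j}+\sum_{i=1}^n\Big\{\theta_3(\kappa_i+\rho_i)E_{i,0}+\sum_{j=1}^n(\kappa_i+\rho_i)E_{i,j}\Big\},\\ A_0^{(1)}&=(\kappa_0+\rho_1)E_{0,0}-\sum_{j=1}^nE_{0,j}-\sum_{j=1}^nE_{0,n+j}+\sum_{i=1}^n\Big\{(\rho_1-\rho_i)E_{i,i}-\sum_{j=i+1}^n(\kappa_i+\rho_i)E_{i,j}\Big\}\\ &\quad+\sum_{i=1}^n\Big\{(\rho_1-\rho_i)E_{n+i,n+i}-\sum_{j=i+1}^n(\kappa_i+\rho_i)E_{n+i,n+j}\Big\},\\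 A_t&=\theta_2E_{0,0}+\sum_{j=1}^nE_{0,n+j}+\sum_{i=1}^n\Big\{\theta_2(\kappa_i+\rho_i)E_{n+i,0}+\sum_{j=1}^n(\kappa_i+\rho_i)E_{n+i,n+j}\Big\},\\ A_1^{(2)}&=\sum_{i=1}^n\{\theta_2E_{i,i}-\theta_3E_{i,n+i}\}+\sum_{i=1}^n\{-\theta_2E_{n+i,i}+\theta_3E_{n+i,n+i}\},\\ A_0^{(2)}&=\sum_{i=1}^n\Big\{-\theta_2(\kappa_i+\rho_i)E_{n+i,0}+\theta_2E_{n+i,i}-\sum_{j=1}^{i-1}(\kappa_i+\rho_i)E_{n+i,n+j}+(\theta_2+\kappa_0-\kappa_i)E_{n+i,n+i}\Big\}. \end{align*}
   Context: $d$ denotes the exterior derivative with respect to $(t_1,t_2)$. Products of the commuting operators $\delta_1,\delta_2$ are compositions of differential operators; empty products equal $1$. *)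

(* Defs.v *)
From Stdlib Require Import Reals ClassicalEpsilon.
From Coquelicot Require Import Coquelicot.
Local Open Scope C_scope.

Definition fn2 := C -> C -> C.

(* complex derivative of a one-variable function (chosen classically;
   the value is only meaningful where the derivative exists) *)
Definition cderiv (g : C -> C) (x : C) : C :=
  epsilon (inhabits (RtoC 0)) (fun l => @is_derive C_AbsRing C_NormedModule g x l).

Definition D1 (f : fn2) : fn2 := fun t1 t2 => cderiv (fun s => f s t2) t1.
Definition D2 (f : fn2) : fn2 := fun t1 t2 => cderiv (fun s => f t1 s) t2.

Definition delta1 (f : fn2) : fn2 := fun t1 t2 => t1 * D1 f t1 t2.
Definition delta2 (f : fn2) : fn2 := fun t1 t2 => (t2 - 1) * D2 f t1 t2.

Definition opc (L : fn2 -> fn2) (a : C) (f : fn2) : fn2 :=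
  fun t1 t2 => L f t1 t2 + a * f t1 t2.
Definition fadd (f g : fn2) : fn2 := fun t1 t2 => f t1 t2 + g t1 t2.
Definition fsub (f g : fn2) : fn2 := fun t1 t2 => f t1 t2 - g t1 t2.
Definition fscal (a : C) (f : fn2) : fn2 := fun t1 t2 => a * f t1 t2.
Definition fmul (h : fn2) (f : fn2) : fn2 := fun t1 t2 => h t1 t2 * f t1 t2.

(* composition product  F lo o F (lo+1) o ... o F hi  (identity if hi < lo) *)
Fixpoint prodop_aux (F : nat -> fn2 -> fn2) (lo k : nat) : fn2 -> fn2 :=
  match k with
  | O => fun f => f
  | S k' => fun f => F lo (prodop_aux F (S lo) k' f)
  end.
Definition prodop (F : nat -> fn2 -> fn2) (lo hi : nat) : fn2 -> fn2 :=
  prodop_aux F lo (S hi - lo).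

Fixpoint csum_aux (F : nat -> C) (lo k : nat) : C :=
  match k with
  | O => RtoC 0
  | S k' => F lo + csum_aux F (S lo) k'
  end.
Definition csum (F : nat -> C) (lo hi : nat) : C := csum_aux F lo (S hi - lo).

(* matrices indexed by nat x nat (only indices 0..2n are used) *)
Definition mat := nat -> nat -> C.
Definition E (i j : nat) : mat :=
  fun a b => if andb (Nat.eqb a i) (Nat.eqb b j) then RtoC 1 else RtoC 0.
Definition madd (A B : mat) : mat := fun a b => A a b + B a b.
Definition mscal (c : C) (A : mat) : mat := fun a b => c * A a b.
Definition mopp (A : mat) : mat := fun a b => - A a b.
Definition msum (F : nat -> mat) (lo hi : nat) : mat :=
  fun a b => csum (fun i => F i a b) lo hi.

(* holomorphy on an open set U of C^2: (complex, Frechet) differentiable at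
   every point of U, and likewise for the partial derivatives, recursively
   (equivalent to holomorphy, since partials of holomorphic maps are
   holomorphic) *)
Definition cdiff2_at (f : fn2) (p : C * C) : Prop :=
  @ex_filterdiff C_AbsRing
    (prod_NormedModule C_AbsRing C_NormedModule C_NormedModule)
    C_NormedModule (fun q => f (fst q) (snd q)) (locally p).

CoInductive holo_on (U : C * C -> Prop) : fn2 -> Prop :=
  | holo_on_intro (f : fn2) :
      (forall p, U p -> cdiff2_at f p) ->
      holo_on U (D1 f) -> holo_on U (D2 f) -> holo_on U f.

Section Data.
Variables (n : nat) (th2 th3 : C) (ka rho : nat -> C).

Definition b_ (i : nat) : C := - ka i - rho 1%nat.
Definition b' : C := - th2.
Definition c_ (i : nat) : C :=
  if Nat.eqb i 1 then - ka 0%nat - rho 1%nat + 1 else - rho 1%nat + rho i + 1.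
Definition c' : C := 1 - th2 - th3.

Definition Bop (j : nat) : fn2 -> fn2 := opc delta1 (b_ j).
Definition Cop (j : nat) : fn2 -> fn2 := opc delta1 (c_ j - 1).

Definition eq1 (z : fn2) : fn2 :=
  fsub (fmul (fun t1 _ => t1)
          (opc (fun f => fadd (delta1 f) (delta2 f)) (c_ 1 + c' - 2)
             (prodop Bop 1 n z)))
       (delta1 (prodop Cop 1 n z)).
Definition eq2 (z : fn2) : fn2 :=
  fsub (fmul (fun _ t2 => 1 - t2)
          (opc (fun f => fadd (delta1 f) (delta2 f)) (c_ 1 + c' - 2)
             (opc delta2 b' z)))
       (delta2 (opc delta2 (c' - 1) z)).

Definition wvec (z : fn2) (k : nat) : fn2 :=
  if Nat.eqb k 0 then
    fscal (-1) (prodop Bop 1 n (opc delta2 (c' - 1) z))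
  else if Nat.eqb k 1 then
    fscal (- b_ 1 * (b' - c' + 1)) (prodop Bop 2 n (Cop 1 z))
  else if Nat.leb k n then
    fscal (- (b_ k - c_ k + 1) * (b' - c' + 1))
      (prodop Bop (S k) n (prodop Cop 1 (k - 1) (delta1 z)))
  else if Nat.eqb k (S n) then
    fscal (b_ 1) (prodop Bop 2 n (Cop 1 (opc delta2 b' z)))
  else
    let i := (k - n)%nat in
    fscal (b_ i - c_ i + 1)
      (prodop Bop (S i) n (prodop Cop 1 (i - 1) (delta1 (opc delta2 b' z)))).

Definition kr (i : nat) : C := ka i + rho i.

Definition A11 : mat :=
  madd (mscal th3 (E 0 0))
  (madd (msum (fun j => E 0 j) 1 n)
        (msum (fun i => madd (mscal (th3 * kr i) (E i 0))
                             (msum (fun j => mscal (kr i) (E i j)) 1 n)) 1 n)).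

Definition A01 : mat :=
  madd (mscal (ka 0%nat + rho 1%nat) (E 0 0))
  (madd (mopp (msum (fun j => E 0 j) 1 n))
  (madd (mopp (msum (fun j => E 0 (n + j)) 1 n))
  (madd (msum (fun i => madd (mscal (rho 1%nat - rho i) (E i i))
                 (mopp (msum (fun j => mscal (kr i) (E i j)) (S i) n))) 1 n)
        (msum (fun i => madd (mscal (rho 1%nat - rho i) (E (n + i) (n + i)))
                 (mopp (msum (fun j => mscal (kr i) (E (n + i) (n + j))) (S i) n))) 1 n)))).

Definition At : mat :=
  madd (mscal th2 (E 0 0))
  (madd (msum (fun j => E 0 (n + j)) 1 n)
        (msum (fun i => madd (mscal (th2 * kr i) (E (n + i) 0))
                 (msum (fun j => mscal (kr i) (E (n + i) (n + j))) 1 n)) 1 n)).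

Definition A12 : mat :=
  madd (msum (fun i => madd (mscal th2 (E i i)) (mscal (- th3) (E i (n + i)))) 1 n)
       (msum (fun i => madd (mscal (- th2) (E (n + i) i))
                            (mscal th3 (E (n + i) (n + i)))) 1 n).

Definition A02 : mat :=
  msum (fun i =>
    madd (mscal (- th2 * kr i) (E (n + i) 0))
    (madd (mscal th2 (E (n + i) i))
    (madd (mopp (msum (fun j => mscal (kr i) (E (n + i) (n + j))) 1 (i - 1)))
          (mscal (th2 + ka 0%nat - ka i) (E (n + i) (n + i)))))) 1 n.

End Data.

(* Main.v *)
Require Import Defs.
From Stdlib Require Import Reals ClassicalEpsilon FunctionalExtensionality PropExtensionality Lia Lra.
From Coquelicot Require Import Coquelicot.
Local Open Scope C_scope.

Module A.

Lemma cderiv_spec (g : C -> C) x :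
  @ex_derive C_AbsRing C_NormedModule g x ->
  @is_derive C_AbsRing C_NormedModule g x (cderiv g x).
Proof. intros [l H]. unfold cderiv. apply epsilon_spec. exists l. exact H. Qed.

Lemma cderiv_unique (g : C -> C) x l :
  @is_derive C_AbsRing C_NormedModule g x l -> cderiv g x = l.
Proof.
  intros H. rewrite <- (is_C_derive_unique _ _ _ H).
  symmetry; apply is_C_derive_unique, cderiv_spec. exists l; exact H.
Qed.

Lemma open_slice1 (U : C * C -> Prop) a b : open U -> U (a,b) ->
  @locally C_UniformSpace a (fun s => U (s,b)).
Proof.
  intros hU H. destruct (hU _ H) as [eps He]. exists eps. intros s Hs.
  apply He. split; [exact Hs | apply ball_center].
Qed.

Lemma open_slice2 (U : C * C -> Prop) a b : open U -> U (a,b) ->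
  @locally C_UniformSpace b (fun s => U (a,s)).
Proof.
  intros hU H. destruct (hU _ H) as [eps He]. exists eps. intros s Hs.
  apply He. split; [apply ball_center | exact Hs].
Qed.

Lemma is_linear_C_id : @is_linear C_AbsRing (AbsRing_NormedModule C_AbsRing) C_NormedModule (fun s => s).
Proof.
  apply Build_is_linear.
  - reflexivity.
  - reflexivity.
  - exists 1%R. split. lra. intros x. rewrite Rmult_1_l. apply Req_le. reflexivity.
Qed.

Lemma cdiff_partial1 f a b : cdiff2_at f (a,b) ->
  @ex_derive C_AbsRing C_NormedModule (fun s => f s b) a.
Proof.
  intros [l Hl]. apply ex_derive_filterdiff.
  eexists.
  apply (filterdiff_comp'_2 (K:=C_AbsRing) (T:=AbsRing_NormedModule C_AbsRing)
           (U:=C_NormedModule) (V:=C_NormedModule) (W:=C_NormedModule)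
           (fun s : C => s) (fun _ : C => b)
           (fun u v => f u v) a (fun s => s) (fun _ => zero) (fun u v => l (u,v))).
  - apply filterdiff_linear, is_linear_C_id.
  - apply (filterdiff_const (K:=C_AbsRing) (U:=AbsRing_NormedModule C_AbsRing) (V:=C_NormedModule)).
  - simpl. eapply filterdiff_ext_lin. exact Hl. intros [u v]; reflexivity.
Qed.

Lemma cdiff_partial2 f a b : cdiff2_at f (a,b) ->
  @ex_derive C_AbsRing C_NormedModule (fun s => f a s) b.
Proof.
  intros [l Hl]. apply ex_derive_filterdiff.
  eexists.
  apply (filterdiff_comp'_2 (K:=C_AbsRing) (T:=AbsRing_NormedModule C_AbsRing)
           (U:=C_NormedModule) (V:=C_NormedModule) (W:=C_NormedModule)
           (fun _ : C => a) (fun s : C => s)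
           (fun u v => f u v) b (fun _ => zero) (fun s => s) (fun u v => l (u,v))).
  - apply (filterdiff_const (K:=C_AbsRing) (U:=AbsRing_NormedModule C_AbsRing) (V:=C_NormedModule)).
  - apply filterdiff_linear, is_linear_C_id.
  - simpl. eapply filterdiff_ext_lin. exact Hl. intros [u v]; reflexivity.
Qed.

End A.
Import A.

Module B.

Lemma dbr1 (f : C -> C) x l :
  @is_derive C_AbsRing C_NormedModule f x l -> @is_derive C_AbsRing (AbsRing_NormedModule C_AbsRing) f x l.
Proof. intros [[H1 H2 H3] H]. split. split. exact H1. exact H2. exact H3. exact H. Qed.
Lemma dbr2 (f : C -> C) x l :
  @is_derive C_AbsRing (AbsRing_NormedModule C_AbsRing) f x l -> @is_derive C_AbsRing C_NormedModule f x l.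
Proof. intros [[H1 H2 H3] H]. split. split. exact H1. exact H2. exact H3. exact H. Qed.
Lemma fbr1 {T : NormedModule C_AbsRing} (F : (T -> Prop) -> Prop) (f : T -> C) :
  @ex_filterdiff C_AbsRing T C_NormedModule f F -> @ex_filterdiff C_AbsRing T (AbsRing_NormedModule C_AbsRing) f F.
Proof. intros [l [[H1 H2 H3] H]]. exists l. split. split. exact H1. exact H2. exact H3. exact H. Qed.
Lemma fbr2 {T : NormedModule C_AbsRing} (F : (T -> Prop) -> Prop) (f : T -> C) :
  @ex_filterdiff C_AbsRing T (AbsRing_NormedModule C_AbsRing) f F -> @ex_filterdiff C_AbsRing T C_NormedModule f F.
Proof. intros [l [[H1 H2 H3] H]]. exists l. split. split. exact H1. exact H2. exact H3. exact H. Qed.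

Lemma Cmult_comm' : forall n m : C_AbsRing, mult n m = mult m n.
Proof. intros; apply Cmult_comm. Qed.

Lemma der_mult (f g : C -> C) x df dg :
  @is_derive C_AbsRing C_NormedModule f x df ->
  @is_derive C_AbsRing C_NormedModule g x dg ->
  @is_derive C_AbsRing C_NormedModule (fun s => f s * g s) x (df * g x + f x * dg).
Proof.
  intros Hf Hg. apply dbr2. apply dbr1 in Hf. apply dbr1 in Hg.
  exact (is_derive_mult f g x df dg Hf Hg Cmult_comm').
Qed.

Lemma der_const (k : C) x :
  @is_derive C_AbsRing C_NormedModule (fun _ => k) x (RtoC 0).
Proof. apply (@is_derive_const C_AbsRing C_NormedModule). Qed.

Lemma der_id x :
  @is_derive C_AbsRing C_NormedModule (fun s => s) x (RtoC 1).
Proof. apply dbr2. apply (@is_derive_id C_AbsRing). Qed.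

Lemma der_plus (f g : C -> C) x df dg :
  @is_derive C_AbsRing C_NormedModule f x df ->
  @is_derive C_AbsRing C_NormedModule g x dg ->
  @is_derive C_AbsRing C_NormedModule (fun s => f s + g s) x (df + dg).
Proof. intros Hf Hg. exact (is_derive_plus f g x df dg Hf Hg). Qed.

Lemma der_scal (f : C -> C) k x df :
  @is_derive C_AbsRing C_NormedModule f x df ->
  @is_derive C_AbsRing C_NormedModule (fun s => k * f s) x (k * df).
Proof.
  intros Hf. replace (k * df) with (RtoC 0 * f x + k * df) by ring.
  apply der_mult. apply der_const. exact Hf.
Qed.

Section Smooth.
Variable U : C * C -> Prop.
Hypothesis hU : open U.

Definition eqU (f g : fn2) := forall a b, U (a,b) -> f a b = g a b.

Lemma eqU_refl f : eqU f f. Proof. intros a b _; reflexivity. Qed.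
Lemma eqU_sym f g : eqU f g -> eqU g f. Proof. intros H a b h; symmetry; auto. Qed.
Lemma eqU_trans f g h : eqU f g -> eqU g h -> eqU f h.
Proof. intros H1 H2 a b hh; rewrite H1; auto. Qed.

Lemma loc_abs a P : @locally C_UniformSpace a P -> @locally (AbsRing_UniformSpace C_AbsRing) a P.
Proof. intros [eps H]. exists eps. intros y Hy. apply H. apply C_NormedModule_mixin_compat1. exact Hy. Qed.

Lemma D1_ext f g : eqU f g -> eqU (D1 f) (D1 g).
Proof.
  intros H a b Hab. unfold D1, cderiv. f_equal.
  apply functional_extensionality; intro l. apply propositional_extensionality.
  assert (HL : @locally (AbsRing_UniformSpace C_AbsRing) a (fun s => f s b = g s b)).
  { apply loc_abs. eapply filter_imp; [|exact (open_slice1 U a b hU Hab)].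
    intros s Hs; apply H; exact Hs. }
  split; intro Hd; unfold is_derive in *; eapply (filterdiff_ext_locally (K:=C_AbsRing) (U:=AbsRing_NormedModule C_AbsRing) (V:=C_NormedModule)); try exact Hd.
  exact HL. eapply filter_imp; [|exact HL]. intros; symmetry; auto.
Qed.

Lemma D2_ext f g : eqU f g -> eqU (D2 f) (D2 g).
Proof.
  intros H a b Hab. unfold D2, cderiv. f_equal.
  apply functional_extensionality; intro l. apply propositional_extensionality.
  assert (HL : @locally (AbsRing_UniformSpace C_AbsRing) b (fun s => f a s = g a s)).
  { apply loc_abs. eapply filter_imp; [|exact (open_slice2 U a b hU Hab)].
    intros s Hs; apply H; exact Hs. }
  split; intro Hd; unfold is_derive in *; eapply (filterdiff_ext_locally (K:=C_AbsRing) (U:=AbsRing_NormedModule C_AbsRing) (V:=C_NormedModule)); try exact Hd.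
  exact HL. eapply filter_imp; [|exact HL]. intros; symmetry; auto.
Qed.

Inductive gen : fn2 -> Prop :=
| gen_h f : holo_on U f -> gen f
| gen_add f g : gen f -> gen g -> gen (fadd f g)
| gen_scal a f : gen f -> gen (fscal a f)
| gen_x1 f : gen f -> gen (fmul (fun t1 _ => t1) f)
| gen_x2 f : gen f -> gen (fmul (fun _ t2 => t2) f)
| gen_ext f g : gen f -> eqU f g -> gen g.

Lemma gen_cdiff f : gen f -> forall p, U p -> cdiff2_at f p.
Proof.
  induction 1; intros p Hp.
  - destruct H. auto.
  - unfold cdiff2_at.
    apply (ex_filterdiff_ext (F:=locally p) (fun q : prod_NormedModule C_AbsRing C_NormedModule C_NormedModule => @plus C_NormedModule (f (fst q) (snd q)) (g (fst q) (snd q)))).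
    intros; reflexivity.
    apply ex_filterdiff_plus_fct.
    apply IHgen1; auto. apply IHgen2; auto.
  - unfold cdiff2_at.
    apply (ex_filterdiff_ext (F:=locally p) (fun q : prod_NormedModule C_AbsRing C_NormedModule C_NormedModule => @scal C_AbsRing C_NormedModule a (f (fst q) (snd q)))).
    intros; reflexivity.
    apply (ex_filterdiff_scal_r_fct (K:=C_AbsRing) (V:=C_NormedModule)).
    apply Cmult_comm'. apply IHgen; auto.
  - unfold cdiff2_at. apply fbr2.
    apply (ex_filterdiff_ext (F:=locally p) (fun q : prod_NormedModule C_AbsRing C_NormedModule C_NormedModule => @mult C_AbsRing (fst q) (f (fst q) (snd q)))).
    intros; reflexivity.
    apply (ex_filterdiff_mult_fct (K:=C_AbsRing) (fun q : prod_NormedModule C_AbsRing C_NormedModule C_NormedModule => fst q)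
             (fun q => f (fst q) (snd q)) p).
    apply Cmult_comm'.
    apply fbr1, ex_filterdiff_linear, is_linear_fst.
    apply fbr1, IHgen; auto.
  - unfold cdiff2_at. apply fbr2.
    apply (ex_filterdiff_ext (F:=locally p) (fun q : prod_NormedModule C_AbsRing C_NormedModule C_NormedModule => @mult C_AbsRing (snd q) (f (fst q) (snd q)))).
    intros; reflexivity.
    apply (ex_filterdiff_mult_fct (K:=C_AbsRing) (fun q : prod_NormedModule C_AbsRing C_NormedModule C_NormedModule => snd q)
             (fun q => f (fst q) (snd q)) p).
    apply Cmult_comm'.
    apply fbr1, ex_filterdiff_linear, is_linear_snd.
    apply fbr1, IHgen; auto.
  - destruct p as [a b]. unfold cdiff2_at.
    apply (ex_filterdiff_ext_locally (fun q => f (fst q) (snd q))).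
    + eapply filter_imp; [|exact (hU _ Hp)]. intros [u v] Huv. apply H0. exact Huv.
    + apply IHgen; auto.
Qed.

Lemma gen_d1 f a b : gen f -> U (a,b) ->
  @is_derive C_AbsRing C_NormedModule (fun s => f s b) a (D1 f a b).
Proof. intros H Hab. apply cderiv_spec, cdiff_partial1, gen_cdiff; auto. Qed.
Lemma gen_d2 f a b : gen f -> U (a,b) ->
  @is_derive C_AbsRing C_NormedModule (fun s => f a s) b (D2 f a b).
Proof. intros H Hab. apply cderiv_spec, cdiff_partial2, gen_cdiff; auto. Qed.

Lemma D1_add f g : gen f -> gen g -> eqU (D1 (fadd f g)) (fadd (D1 f) (D1 g)).
Proof. intros Hf Hg a b Hab. apply cderiv_unique. apply der_plus; apply gen_d1; auto. Qed.
Lemma D2_add f g : gen f -> gen g -> eqU (D2 (fadd f g)) (fadd (D2 f) (D2 g)).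
Proof. intros Hf Hg a b Hab. apply cderiv_unique. apply der_plus; apply gen_d2; auto. Qed.
Lemma D1_scal k f : gen f -> eqU (D1 (fscal k f)) (fscal k (D1 f)).
Proof. intros Hf a b Hab. apply cderiv_unique. apply der_scal; apply gen_d1; auto. Qed.
Lemma D2_scal k f : gen f -> eqU (D2 (fscal k f)) (fscal k (D2 f)).
Proof. intros Hf a b Hab. apply cderiv_unique. apply der_scal; apply gen_d2; auto. Qed.
Lemma D1_psi (psi : C -> C) f : gen f ->
  eqU (D1 (fun a b => psi b * f a b)) (fun a b => psi b * D1 f a b).
Proof. intros Hf a b Hab. apply cderiv_unique. apply der_scal; apply gen_d1; auto. Qed.
Lemma D2_psi (psi : C -> C) f : gen f ->
  eqU (D2 (fun a b => psi a * f a b)) (fun a b => psi a * D2 f a b).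
Proof. intros Hf a b Hab. apply cderiv_unique. apply der_scal; apply gen_d2; auto. Qed.
Lemma D1_x1 f : gen f -> eqU (D1 (fmul (fun t1 _ => t1) f)) (fadd f (fmul (fun t1 _ => t1) (D1 f))).
Proof.
  intros Hf a b Hab. apply cderiv_unique. unfold fadd, fmul.
  replace (f a b + a * D1 f a b) with (RtoC 1 * f a b + a * D1 f a b) by ring.
  apply (der_mult (fun s => s) (fun s => f s b)). apply der_id. apply gen_d1; auto.
Qed.
Lemma D2_x2 f : gen f -> eqU (D2 (fmul (fun _ t2 => t2) f)) (fadd f (fmul (fun _ t2 => t2) (D2 f))).
Proof.
  intros Hf a b Hab. apply cderiv_unique. unfold fadd, fmul.
  replace (f a b + b * D2 f a b) with (RtoC 1 * f a b + b * D2 f a b) by ring.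
  apply (der_mult (fun s => s) (fun s => f a s)). apply der_id. apply gen_d2; auto.
Qed.

Lemma gen_D1 f : gen f -> gen (D1 f).
Proof.
  induction 1.
  - apply gen_h. destruct H; auto.
  - eapply gen_ext. apply gen_add; [exact IHgen1|exact IHgen2]. apply eqU_sym, D1_add; auto.
  - eapply gen_ext. apply gen_scal; eauto. apply eqU_sym, D1_scal; auto.
  - eapply gen_ext. apply gen_add. exact H. apply gen_x1; eauto. apply eqU_sym, D1_x1; auto.
  - eapply gen_ext. apply gen_x2; eauto. apply eqU_sym. apply (D1_psi (fun b => b)); auto.
  - eapply gen_ext. exact IHgen. apply D1_ext; auto.
Qed.

Lemma gen_D2 f : gen f -> gen (D2 f).
Proof.
  induction 1.
  - apply gen_h. destruct H; auto.
  - eapply gen_ext. apply gen_add; [exact IHgen1|exact IHgen2]. apply eqU_sym, D2_add; auto.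
  - eapply gen_ext. apply gen_scal; eauto. apply eqU_sym, D2_scal; auto.
  - eapply gen_ext. apply gen_x1; eauto. apply eqU_sym. apply (D2_psi (fun b => b)); auto.
  - eapply gen_ext. apply gen_add. exact H. apply gen_x2; eauto. apply eqU_sym, D2_x2; auto.
  - eapply gen_ext. exact IHgen. apply D2_ext; auto.
Qed.

CoFixpoint holo_of_gen f (H : gen f) : holo_on U f :=
  holo_on_intro U f (gen_cdiff f H) (holo_of_gen (D1 f) (gen_D1 f H))
    (holo_of_gen (D2 f) (gen_D2 f H)).

End Smooth.

End B.
Import B.

Module S.

Lemma re_im_der (g : C -> C) x0 u0 l (sel : C -> R)
  (Hsel : forall c d : C, sel (c - d) = (sel c - sel d)%R)
  (Hsr : forall (r : R) (c : C), sel (RtoC r * c) = (r * sel c)%R)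
  (Hbd : forall c, (Rabs (sel c) <= Cmod c)%R) :
  @is_derive C_AbsRing C_NormedModule g (x0 + RtoC u0) l ->
  @is_derive R_AbsRing R_NormedModule (fun u : R => sel (g (x0 + RtoC u))) u0 (sel l).
Proof.
  intros [_ Hd]. split. apply is_linear_scal_l.
  intros x' Hx'. apply (is_filter_lim_locally_unique (K:=R_AbsRing) (V:=R_NormedModule)) in Hx'. subst x'.
  intros eps.
  assert (Hx : @is_filter_lim (AbsRing_NormedModule C_AbsRing) (@locally (AbsRing_UniformSpace C_AbsRing) (x0 + RtoC u0)) (x0 + RtoC u0)) by (intros P HP; exact HP).
  destruct (Hd _ Hx eps) as [delta Hdl].
  exists delta. intros u Hu.
  assert (Hb : @ball (AbsRing_UniformSpace C_AbsRing) (x0 + RtoC u0) delta (x0 + RtoC u)).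
  { change (Cmod (x0 + RtoC u - (x0 + RtoC u0)) < delta)%R.
    replace (x0 + RtoC u - (x0 + RtoC u0)) with (RtoC (u - u0)).
    rewrite Cmod_R. exact Hu.
    unfold Cminus, Cplus, Copp, RtoC. simpl. f_equal; ring. }
  specialize (Hdl _ Hb).
  change (Rle (Rabs (Rminus (Rminus (sel (g (x0 + RtoC u))) (sel (g (x0 + RtoC u0)))) (Rmult (Rminus u u0) (sel l))))
          (Rmult eps (Rabs (Rminus u u0)))).
  change (Rle (Cmod (g (x0 + RtoC u) - g (x0 + RtoC u0) - (x0 + RtoC u - (x0 + RtoC u0)) * l))
          (Rmult eps (Cmod (x0 + RtoC u - (x0 + RtoC u0))))) in Hdl.
  replace (x0 + RtoC u - (x0 + RtoC u0)) with (RtoC (u - u0)) in Hdl.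
  rewrite Cmod_R in Hdl. eapply Rle_trans; [|exact Hdl].
  rewrite <- Hsr, <- !Hsel. apply Hbd.
  unfold Cminus, Cplus, Copp, RtoC. simpl. f_equal; ring.
Qed.

Lemma Cadd0 (a : C) : a + RtoC 0 = a.
Proof. destruct a as [x y]; unfold Cplus, RtoC; simpl; f_equal; ring. Qed.

Lemma sqrt2_lt2 : (sqrt 2 < 2)%R.
Proof.
  rewrite <- (sqrt_square 2) at 2 by lra. apply sqrt_lt_1; lra.
Qed.

Lemma cont_sel (h : fn2) a b (sel : C -> R)
  (Hsel : forall c d : C, sel (c - d) = (sel c - sel d)%R)
  (Hbd : forall c, (Rabs (sel c) <= Cmod c)%R) :
  cdiff2_at h (a,b) ->
  continuity_2d_pt (fun u v => sel (h (a + RtoC u) (b + RtoC v))) 0 0.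
Proof.
  intros Hc eps.
  pose proof (filterdiff_continuous _ _ Hc) as Hcont.
  assert (He2 : (0 < eps / 2)%R) by (destruct eps; simpl; lra).
  specialize (Hcont (ball (h a b) (mkposreal _ He2)) (locally_ball _ _)).
  destruct Hcont as [d Hd].
  exists d. intros u v Hu Hv.
  assert (Hb : ball (a,b) d (a + RtoC u, b + RtoC v)).
  { split; split; simpl.
    - change (Rabs ((fst a + u) - fst a) < d)%R. replace ((fst a + u) - fst a)%R with (u - 0)%R by ring. exact Hu.
    - change (Rabs ((snd a + 0) - snd a) < d)%R. replace ((snd a + 0) - snd a)%R with 0%R by ring. rewrite Rabs_R0. apply cond_pos.
    - change (Rabs ((fst b + v) - fst b) < d)%R. replace ((fst b + v) - fst b)%R with (v - 0)%R by ring. exact Hv.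
    - change (Rabs ((snd b + 0) - snd b) < d)%R. replace ((snd b + 0) - snd b)%R with 0%R by ring. rewrite Rabs_R0. apply cond_pos. }
  specialize (Hd _ Hb). simpl in Hd.
  pose proof (C_NormedModule_mixin_compat2 (h a b) _ (mkposreal _ He2) Hd) as Hd2. simpl in Hd2.
  rewrite !Cadd0. rewrite <- Hsel.
  eapply Rle_lt_trans. apply Hbd.
  eapply Rlt_le_trans. exact Hd2.
  pose proof sqrt2_lt2. destruct eps as [e He]; simpl. nra.
Qed.

Lemma loc_lt (u delta : R) : (Rabs u < delta)%R ->
  @locally R_UniformSpace u (fun z => Rabs z < delta)%R.
Proof.
  intros H. assert (Hp : (0 < delta - Rabs u)%R) by lra.
  exists (mkposreal _ Hp). intros z Hz.
  change (Rabs (z - u) < delta - Rabs u)%R in Hz.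
  pose proof (Rabs_triang_inv z u). lra.
Qed.

Lemma im_le_Cmod (c : C) : (Rabs (Im c) <= Cmod c)%R.
Proof. eapply Rle_trans; [|apply Rmax_Cmod]. apply Rmax_r. Qed.

Section Comm.
Variable U : C * C -> Prop.
Hypothesis hU : open U.

Lemma sel_comm f a b (sel : C -> R)
  (Hsel : forall c d : C, sel (c - d) = (sel c - sel d)%R)
  (Hsr : forall (r : R) (c : C), sel (RtoC r * c) = (r * sel c)%R)
  (Hbd : forall c, (Rabs (sel c) <= Cmod c)%R) :
  holo_on U f -> U (a,b) -> sel (D1 (D2 f) a b) = sel (D2 (D1 f) a b).
Proof.
  intros Hf Hab.
  destruct (hU _ Hab) as [delta Hdel].
  assert (HinU : forall u v : R, (Rabs u < delta)%R -> (Rabs v < delta)%R ->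
             U (a + RtoC u, b + RtoC v)).
  { intros u v Hu Hv. apply Hdel. split; split; simpl.
    - change (Rabs ((fst a + u) - fst a) < delta)%R. replace ((fst a + u) - fst a)%R with u by ring. exact Hu.
    - change (Rabs ((snd a + 0) - snd a) < delta)%R. replace ((snd a + 0) - snd a)%R with 0%R by ring. rewrite Rabs_R0. apply cond_pos.
    - change (Rabs ((fst b + v) - fst b) < delta)%R. replace ((fst b + v) - fst b)%R with v by ring. exact Hv.
    - change (Rabs ((snd b + 0) - snd b) < delta)%R. replace ((snd b + 0) - snd b)%R with 0%R by ring. rewrite Rabs_R0. apply cond_pos. }
  set (F := fun (h : fn2) (u v : R) => sel (h (a + RtoC u) (b + RtoC v))).
  assert (HD1 : forall h u v, holo_on U h -> (Rabs u < delta)%R -> (Rabs v < delta)%R ->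
     @is_derive R_AbsRing R_NormedModule (fun z => F h z v) u (F (D1 h) u v)).
  { intros h u v Hh Hu Hv. unfold F.
    apply (re_im_der (fun s => h s (b + RtoC v)) a u (D1 h (a + RtoC u) (b + RtoC v)) sel Hsel Hsr Hbd).
    apply (gen_d1 U hU); auto. apply gen_h; auto. }
  assert (HD2 : forall h u v, holo_on U h -> (Rabs u < delta)%R -> (Rabs v < delta)%R ->
     @is_derive R_AbsRing R_NormedModule (fun z => F h u z) v (F (D2 h) u v)).
  { intros h u v Hh Hu Hv. unfold F.
    apply (re_im_der (fun s => h (a + RtoC u) s) b v (D2 h (a + RtoC u) (b + RtoC v)) sel Hsel Hsr Hbd).
    apply (gen_d2 U hU); auto. apply gen_h; auto. }
  assert (Hf1 : holo_on U (D1 f)) by (destruct Hf; auto).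
  assert (Hf2 : holo_on U (D2 f)) by (destruct Hf; auto).
  assert (Hf12 : holo_on U (D1 (D2 f))) by (destruct Hf2; auto).
  assert (Hf21 : holo_on U (D2 (D1 f))) by (destruct Hf1; auto).
  assert (E2 : forall z v, (Rabs z < delta)%R -> (Rabs v < delta)%R ->
             Derive (fun t => F f z t) v = F (D2 f) z v).
  { intros; apply is_derive_unique, HD2; auto. }
  assert (E1 : forall u z, (Rabs u < delta)%R -> (Rabs z < delta)%R ->
             Derive (fun t => F f t z) u = F (D1 f) u z).
  { intros; apply is_derive_unique, HD1; auto. }
  assert (H12 : forall u v, (Rabs u < delta)%R -> (Rabs v < delta)%R ->
     @is_derive R_AbsRing R_NormedModule (fun z => Derive (fun t => F f z t) v) u (F (D1 (D2 f)) u v)).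
  { intros u v Hu Hv. eapply is_derive_ext_loc; [|apply HD1; auto].
    eapply filter_imp; [|apply (loc_lt u delta Hu)]. intros z Hz. simpl. rewrite E2; auto. }
  assert (H21 : forall u v, (Rabs u < delta)%R -> (Rabs v < delta)%R ->
     @is_derive R_AbsRing R_NormedModule (fun z => Derive (fun t => F f t z) u) v (F (D2 (D1 f)) u v)).
  { intros u v Hu Hv. eapply is_derive_ext_loc; [|apply HD2; auto].
    eapply filter_imp; [|apply (loc_lt v delta Hv)]. intros z Hz. simpl. rewrite E1; auto. }
  assert (HR0 : (Rabs 0 < delta)%R) by (rewrite Rabs_R0; apply cond_pos).
  replace (sel (D1 (D2 f) a b)) with (F (D1 (D2 f)) 0%R 0%R) by (unfold F; rewrite !Cadd0; reflexivity).
  replace (sel (D2 (D1 f) a b)) with (F (D2 (D1 f)) 0%R 0%R) by (unfold F; rewrite !Cadd0; reflexivity).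
  rewrite <- (is_derive_unique _ _ _ (H12 0%R 0%R HR0 HR0)).
  rewrite <- (is_derive_unique _ _ _ (H21 0%R 0%R HR0 HR0)).
  apply (Schwarz (F f) 0 0).
  - exists delta. intros u v Hu Hv. rewrite Rminus_0_r in Hu, Hv.
    repeat split.
    + eexists; apply HD1; auto.
    + eexists; apply HD2; auto.
    + eexists; apply H12; auto.
    + eexists; apply H21; auto.
  - apply continuity_2d_pt_ext_loc with (f := F (D1 (D2 f))).
    + exists delta. intros u v Hu Hv. rewrite Rminus_0_r in Hu, Hv.
      symmetry; apply is_derive_unique, H12; auto.
    + unfold F. apply cont_sel; auto. destruct Hf12; auto.
  - apply continuity_2d_pt_ext_loc with (f := F (D2 (D1 f))).
    + exists delta. intros u v Hu Hv. rewrite Rminus_0_r in Hu, Hv.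
      symmetry; apply is_derive_unique, H21; auto.
    + unfold F. apply cont_sel; auto. destruct Hf21; auto.
Qed.

Lemma holo_comm f : holo_on U f -> eqU U (D1 (D2 f)) (D2 (D1 f)).
Proof.
  intros Hf a b Hab.
  assert (h1 : forall c d : C, Re (c - d) = (Re c - Re d)%R) by (intros [? ?] [? ?]; unfold Cminus, Cplus, Copp; simpl; ring).
  assert (h2 : forall (r : R) (c : C), Re (RtoC r * c) = (r * Re c)%R) by (intros ? [? ?]; unfold RtoC, Cmult; simpl; ring).
  assert (h3 : forall c d : C, Im (c - d) = (Im c - Im d)%R) by (intros [? ?] [? ?]; unfold Cminus, Cplus, Copp; simpl; ring).
  assert (h4 : forall (r : R) (c : C), Im (RtoC r * c) = (r * Im c)%R) by (intros ? [? ?]; unfold RtoC, Cmult; simpl; ring).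
  pose proof (sel_comm f a b Re h1 h2 re_le_Cmod Hf Hab) as Hre.
  pose proof (sel_comm f a b Im h3 h4 im_le_Cmod Hf Hab) as Him.
  destruct (D1 (D2 f) a b) as [x1 y1]. destruct (D2 (D1 f) a b) as [x2 y2].
  simpl in Hre, Him. subst; reflexivity.
Qed.
End Comm.

End S.
Import S.

Module P.

Lemma prodop_aux_snoc F k : forall lo f, prodop_aux F lo (S k) f = prodop_aux F lo k (F (lo + k)%nat f).
Proof.
  induction k; intros lo f.
  - simpl. rewrite Nat.add_0_r; reflexivity.
  - change (F lo (prodop_aux F (S lo) (S k) f) = F lo (prodop_aux F (S lo) k (F (lo + S k)%nat f))).
    rewrite IHk. replace (S lo + k)%nat with (lo + S k)%nat by lia. reflexivity.
Qed.

Lemma prodop_cons F lo hi f : (lo <= hi)%nat -> prodop F lo hi f = F lo (prodop F (S lo) hi f).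
Proof. intros H. unfold prodop. replace (S hi - lo)%nat with (S (S hi - S lo)) by lia. reflexivity. Qed.
Lemma prodop_nil F lo hi f : (hi < lo)%nat -> prodop F lo hi f = f.
Proof. intros H. unfold prodop. replace (S hi - lo)%nat with 0%nat by lia. reflexivity. Qed.
Lemma prodop_snoc F lo hi f : (lo <= S hi)%nat -> prodop F lo (S hi) f = prodop F lo hi (F (S hi) f).
Proof.
  intros H. unfold prodop. replace (S (S hi) - lo)%nat with (S (S hi - lo)) by lia.
  rewrite prodop_aux_snoc. f_equal. f_equal. lia.
Qed.

Lemma csum_aux_snoc F k : forall lo, csum_aux F lo (S k) = csum_aux F lo k + F (lo + k)%nat.
Proof.
  induction k; intros lo.
  - simpl. rewrite Nat.add_0_r. ring.
  - change (F lo + csum_aux F (S lo) (S k) = F lo + csum_aux F (S lo) k + F (lo + S k)%nat).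
    rewrite IHk. replace (S lo + k)%nat with (lo + S k)%nat by lia. ring.
Qed.
Lemma csum_cons F lo hi : (lo <= hi)%nat -> csum F lo hi = F lo + csum F (S lo) hi.
Proof. intros H. unfold csum. replace (S hi - lo)%nat with (S (S hi - S lo)) by lia. reflexivity. Qed.
Lemma csum_nil F lo hi : (hi < lo)%nat -> csum F lo hi = RtoC 0.
Proof. intros H. unfold csum. replace (S hi - lo)%nat with 0%nat by lia. reflexivity. Qed.
Lemma csum_snoc F lo hi : (lo <= S hi)%nat -> csum F lo (S hi) = csum F lo hi + F (S hi).
Proof.
  intros H. unfold csum. replace (S (S hi) - lo)%nat with (S (S hi - lo)) by lia.
  rewrite csum_aux_snoc. f_equal. f_equal. lia.
Qed.

Lemma csum_ext F G lo hi : (forall j, (lo <= j <= hi)%nat -> F j = G j) -> csum F lo hi = csum G lo hi.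
Proof.
  unfold csum. remember (S hi - lo)%nat as k. revert lo Heqk.
  induction k; intros lo Hk H; simpl; auto.
  rewrite H by lia. f_equal. apply IHk. lia. intros; apply H; lia.
Qed.

Lemma csum_add F G lo hi : csum (fun j => F j + G j) lo hi = csum F lo hi + csum G lo hi.
Proof.
  unfold csum. generalize (S hi - lo)%nat. intros k. revert lo.
  induction k; intros lo; simpl. ring. rewrite IHk. ring.
Qed.
Lemma csum_scal c F lo hi : csum (fun j => c * F j) lo hi = c * csum F lo hi.
Proof.
  unfold csum. generalize (S hi - lo)%nat. intros k. revert lo.
  induction k; intros lo; simpl. ring. rewrite IHk. ring.
Qed.
Lemma csum_opp F lo hi : csum (fun j => - F j) lo hi = - csum F lo hi.
Proof.
  unfold csum. generalize (S hi - lo)%nat. intros k. revert lo.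
  induction k; intros lo; simpl. ring. rewrite IHk. ring.
Qed.
Lemma csum_zero F lo hi : (forall j, (lo <= j <= hi)%nat -> F j = RtoC 0) -> csum F lo hi = RtoC 0.
Proof.
  intros H. rewrite (csum_ext F (fun _ => RtoC 0)) by auto. clear H.
  unfold csum. generalize (S hi - lo)%nat. intros k. revert lo.
  induction k; intros lo; simpl. reflexivity. rewrite IHk. ring.
Qed.
Lemma csum_single F lo hi m : (lo <= m <= hi)%nat ->
  (forall j, (lo <= j <= hi)%nat -> j <> m -> F j = RtoC 0) -> csum F lo hi = F m.
Proof.
  intros Hm H. revert H Hm. induction hi; intros H Hm.
  - assert (lo = 0 /\ m = 0)%nat as [-> ->] by lia. rewrite csum_cons by lia.
    rewrite csum_nil by lia. ring.
  - destruct (Nat.eq_dec m (S hi)) as [->|Hne].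
    + rewrite csum_snoc by lia. rewrite csum_zero. ring. intros j Hj. apply H; lia.
    + rewrite csum_snoc by lia. rewrite IHhi; [|intros; apply H; lia|lia].
      rewrite (H (S hi)) by lia. ring.
Qed.
Lemma csum_tel (h : nat -> C) i m : (i <= m)%nat ->
  csum (fun j => h j - h (j - 1)%nat) (S i) m = h m - h i.
Proof.
  induction m; intros Him.
  - assert (i = 0)%nat by lia. subst. rewrite csum_nil by lia. ring.
  - destruct (Nat.eq_dec i (S m)) as [->|Hne].
    + rewrite csum_nil by lia. ring.
    + rewrite csum_snoc by lia. rewrite IHm by lia. replace (S m - 1)%nat with m by lia. ring.
Qed.
Lemma csum_aux_swap (F : nat -> nat -> C) lo2 hi2 k : forall lo1,
  csum_aux (fun i => csum (fun j => F i j) lo2 hi2) lo1 k =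
  csum (fun j => csum_aux (fun i => F i j) lo1 k) lo2 hi2.
Proof.
  induction k; intros lo1; simpl.
  - symmetry. apply csum_zero. intros; reflexivity.
  - rewrite IHk. rewrite <- csum_add. reflexivity.
Qed.
Lemma csum_swap (F : nat -> nat -> C) lo1 hi1 lo2 hi2 :
  csum (fun i => csum (fun j => F i j) lo2 hi2) lo1 hi1 =
  csum (fun j => csum (fun i => F i j) lo1 hi1) lo2 hi2.
Proof. unfold csum at 1. rewrite csum_aux_swap. reflexivity. Qed.

End P.
Import P.

Module F.

Section Mat.
Variables (n : nat) (v : nat -> C).

Definition mv (M : mat) (k : nat) := csum (fun j => M k j * v j) 0 (2 * n).

Lemma mv_add A B k : mv (madd A B) k = mv A k + mv B k.
Proof. unfold mv, madd. rewrite <- csum_add. apply csum_ext; intros; ring. Qed.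
Lemma mv_scal c A k : mv (mscal c A) k = c * mv A k.
Proof. unfold mv, mscal. rewrite <- csum_scal. apply csum_ext; intros; ring. Qed.
Lemma mv_opp A k : mv (mopp A) k = - mv A k.
Proof. unfold mv, mopp. rewrite <- csum_opp. apply csum_ext; intros; ring. Qed.
Lemma csum_mult_r F c lo hi : csum F lo hi * c = csum (fun i => F i * c) lo hi.
Proof. rewrite Cmult_comm, <- csum_scal. apply csum_ext; intros; ring. Qed.
Lemma mv_sum F lo hi k : mv (msum F lo hi) k = csum (fun i => mv (F i) k) lo hi.
Proof.
  unfold mv, msum. rewrite csum_swap. apply csum_ext; intros. apply csum_mult_r.
Qed.
Lemma mv_E a b k : (b <= 2 * n)%nat -> mv (E a b) k = if Nat.eqb k a then v b else RtoC 0.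
Proof.
  intros Hb. unfold mv, E. destruct (Nat.eqb_spec k a) as [->|Hne]; simpl.
  - rewrite (csum_single _ 0 (2*n) b).
    + rewrite Nat.eqb_refl. simpl. ring.
    + lia.
    + intros j _ Hj. destruct (Nat.eqb_spec j b) as [|Hn]. contradiction. simpl. ring.
  - apply csum_zero. intros j _. ring.
Qed.
Lemma mv_sum_single F lo hi m k : (lo <= m <= hi)%nat ->
  (forall i, (lo <= i <= hi)%nat -> i <> m -> mv (F i) k = RtoC 0) ->
  mv (msum F lo hi) k = mv (F m) k.
Proof. intros Hm H. rewrite mv_sum. apply (csum_single (fun i => mv (F i) k)); auto. Qed.
Lemma mv_sum_zero F lo hi k :
  (forall i, (lo <= i <= hi)%nat -> mv (F i) k = RtoC 0) ->
  mv (msum F lo hi) k = RtoC 0.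
Proof. intros H. rewrite mv_sum. apply csum_zero; auto. Qed.
Lemma mv_sum_ext F G lo hi k :
  (forall i, (lo <= i <= hi)%nat -> mv (F i) k = G i) ->
  mv (msum F lo hi) k = csum G lo hi.
Proof. intros H. rewrite mv_sum. apply csum_ext; auto. Qed.



Lemma split3 (M1 M2 M3 : mat) d1 d2 d3 k :
  csum (fun j => (M1 k j / d1 + M2 k j / d2 + M3 k j / d3) * v j) 0 (2 * n)
  = mv M1 k / d1 + mv M2 k / d2 + mv M3 k / d3.
Proof.
  unfold mv, Cdiv.
  rewrite (csum_ext _ (fun j => (/ d1 * (M1 k j * v j) + / d2 * (M2 k j * v j)) + / d3 * (M3 k j * v j)))
    by (intros; ring).
  rewrite !csum_add, !csum_scal. ring.
Qed.
Lemma split3' (M1 M2 M3 : mat) d1 d2 d3 k :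
  csum (fun j => (- M1 k j / d1 + M2 k j / d2 + M3 k j / d3) * v j) 0 (2 * n)
  = - mv M1 k / d1 + mv M2 k / d2 + mv M3 k / d3.
Proof.
  unfold mv, Cdiv.
  rewrite (csum_ext _ (fun j => (- / d1 * (M1 k j * v j) + / d2 * (M2 k j * v j)) + / d3 * (M3 k j * v j)))
    by (intros; ring).
  rewrite !csum_add, !csum_scal. ring.
Qed.
End Mat.

Ltac eqbs := repeat match goal with |- context [Nat.eqb ?x ?y] =>
  destruct (Nat.eqb_spec x y); try (exfalso; lia) end.

Ltac mvz := repeat (first [rewrite mv_add | rewrite mv_scal | rewrite mv_opp
   | rewrite mv_E by lia
   | rewrite mv_sum_zero by (let i := fresh "i" in let Hi := fresh "Hi" in intros i Hi; mvz)]);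
  eqbs; try ring.



Section Rows.
Variables (n : nat) (v : nat -> C).
Notation mv := (mv n v).
Variables (th2 th3 : C) (ka rho : nat -> C).

Lemma A11_0 : mv (A11 n th3 ka rho) 0 = th3 * v 0%nat + csum v 1 n.
Proof.
  unfold A11. rewrite mv_add, mv_scal, mv_E by lia. rewrite mv_add.
  rewrite (@mv_sum_ext n v _ v) by (intros; rewrite mv_E by lia; eqbs; reflexivity).
  rewrite mv_sum_zero by (intros; mvz). simpl. ring.
Qed.
Lemma A11_m m : (1 <= m <= n)%nat -> mv (A11 n th3 ka rho) m = kr ka rho m * (th3 * v 0%nat + csum v 1 n).
Proof.
  intros Hm. unfold A11. rewrite mv_add, mv_scal, mv_E by lia. rewrite mv_add.
  rewrite mv_sum_zero by (intros; mvz).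
  rewrite (@mv_sum_single n v _ 1 n m) by (try lia; intros; mvz).
  rewrite mv_add, mv_scal, mv_E by lia.
  rewrite (@mv_sum_ext n v _ (fun j => kr ka rho m * v j)) by (intros; rewrite mv_scal, mv_E by lia; eqbs; reflexivity).
  rewrite csum_scal. eqbs. ring.
Qed.
Lemma A11_nm m : (1 <= m <= n)%nat -> mv (A11 n th3 ka rho) (n + m) = RtoC 0.
Proof.
  intros Hm. unfold A11. mvz.
Qed.

Lemma A01_0 : mv (A01 n ka rho) 0 = (ka 0%nat + rho 1%nat) * v 0%nat - csum v 1 n - csum (fun j => v (n + j)%nat) 1 n.
Proof.
  unfold A01. rewrite mv_add, mv_scal, mv_E by lia. rewrite mv_add, mv_opp.
  rewrite (@mv_sum_ext n v _ v) by (intros; rewrite mv_E by lia; eqbs; reflexivity).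
  rewrite mv_add, mv_opp.
  rewrite (@mv_sum_ext n v _ (fun j => v (n + j)%nat)) by (intros; rewrite mv_E by lia; eqbs; reflexivity).
  rewrite mv_add. rewrite mv_sum_zero by (intros; mvz). rewrite mv_sum_zero by (intros; mvz).
  eqbs. ring.
Qed.
Lemma A01_m m : (1 <= m <= n)%nat -> mv (A01 n ka rho) m =
  (rho 1%nat - rho m) * v m - kr ka rho m * csum v (S m) n.
Proof.
  intros Hm. unfold A01. rewrite mv_add, mv_scal, mv_E by lia. rewrite mv_add, mv_opp.
  rewrite mv_sum_zero by (intros; mvz).
  rewrite mv_add, mv_opp. rewrite mv_sum_zero by (intros; mvz).
  rewrite mv_add. rewrite (@mv_sum_single n v _ 1 n m) by (try lia; intros; mvz).
  rewrite mv_sum_zero by (intros; mvz).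
  rewrite mv_add, mv_scal, mv_E by lia. rewrite mv_opp.
  rewrite (@mv_sum_ext n v _ (fun j => kr ka rho m * v j)) by (intros; rewrite mv_scal, mv_E by lia; eqbs; reflexivity).
  rewrite csum_scal. eqbs. ring.
Qed.
Lemma A01_nm m : (1 <= m <= n)%nat -> mv (A01 n ka rho) (n + m) =
  (rho 1%nat - rho m) * v (n + m)%nat - kr ka rho m * csum (fun j => v (n + j)%nat) (S m) n.
Proof.
  intros Hm. unfold A01. rewrite mv_add, mv_scal, mv_E by lia. rewrite mv_add, mv_opp.
  rewrite mv_sum_zero by (intros; mvz).
  rewrite mv_add, mv_opp. rewrite mv_sum_zero by (intros; mvz).
  rewrite mv_add. rewrite mv_sum_zero by (intros; mvz).
  rewrite (@mv_sum_single n v _ 1 n m) by (try lia; intros; mvz).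
  rewrite mv_add, mv_scal, mv_E by lia. rewrite mv_opp.
  rewrite (@mv_sum_ext n v _ (fun j => kr ka rho m * v (n + j)%nat)) by (intros; rewrite mv_scal, mv_E by lia; eqbs; reflexivity).
  rewrite csum_scal. eqbs. ring.
Qed.

Lemma At_0 : mv (At n th2 ka rho) 0 = th2 * v 0%nat + csum (fun j => v (n + j)%nat) 1 n.
Proof.
  unfold At. rewrite mv_add, mv_scal, mv_E by lia. rewrite mv_add.
  rewrite (@mv_sum_ext n v _ (fun j => v (n + j)%nat)) by (intros; rewrite mv_E by lia; eqbs; reflexivity).
  rewrite mv_sum_zero by (intros; mvz). eqbs. ring.
Qed.
Lemma At_m m : (1 <= m <= n)%nat -> mv (At n th2 ka rho) m = RtoC 0.
Proof. intros Hm. unfold At. mvz. Qed.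
Lemma At_nm m : (1 <= m <= n)%nat -> mv (At n th2 ka rho) (n + m) =
  kr ka rho m * (th2 * v 0%nat + csum (fun j => v (n + j)%nat) 1 n).
Proof.
  intros Hm. unfold At. rewrite mv_add, mv_scal, mv_E by lia. rewrite mv_add.
  rewrite mv_sum_zero by (intros; mvz).
  rewrite (@mv_sum_single n v _ 1 n m) by (try lia; intros; mvz).
  rewrite mv_add, mv_scal, mv_E by lia.
  rewrite (@mv_sum_ext n v _ (fun j => kr ka rho m * v (n + j)%nat)) by (intros; rewrite mv_scal, mv_E by lia; eqbs; reflexivity).
  rewrite csum_scal. eqbs. ring.
Qed.

Lemma A12_0 : mv (A12 n th2 th3) 0 = RtoC 0.
Proof. unfold A12. mvz. Qed.
Lemma A12_m m : (1 <= m <= n)%nat -> mv (A12 n th2 th3) m = th2 * v m - th3 * v (n + m)%nat.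
Proof.
  intros Hm. unfold A12. rewrite mv_add.
  rewrite (@mv_sum_single n v _ 1 n m) by (try lia; intros; mvz).
  rewrite mv_sum_zero by (intros; mvz). mvz.
Qed.
Lemma A12_nm m : (1 <= m <= n)%nat -> mv (A12 n th2 th3) (n + m) = - th2 * v m + th3 * v (n + m)%nat.
Proof.
  intros Hm. unfold A12. rewrite mv_add.
  rewrite mv_sum_zero by (intros; mvz).
  rewrite (@mv_sum_single n v _ 1 n m) by (try lia; intros; mvz). mvz.
Qed.

Lemma A02_0 : mv (A02 n th2 ka rho) 0 = RtoC 0.
Proof. unfold A02. mvz. Qed.
Lemma A02_m m : (1 <= m <= n)%nat -> mv (A02 n th2 ka rho) m = RtoC 0.
Proof. intros Hm. unfold A02. mvz. Qed.
Lemma A02_nm m : (1 <= m <= n)%nat -> mv (A02 n th2 ka rho) (n + m) =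
  - th2 * kr ka rho m * v 0%nat + th2 * v m - kr ka rho m * csum (fun j => v (n + j)%nat) 1 (m - 1)
  + (th2 + ka 0%nat - ka m) * v (n + m)%nat.
Proof.
  intros Hm. unfold A02.
  rewrite (@mv_sum_single n v _ 1 n m) by (try lia; intros; mvz).
  rewrite mv_add, mv_scal, mv_E by lia. rewrite mv_add, mv_scal, mv_E by lia.
  rewrite mv_add, mv_opp, mv_scal, mv_E by lia.
  rewrite (@mv_sum_ext n v _ (fun j => kr ka rho m * v (n + j)%nat)) by (intros; rewrite mv_scal, mv_E by lia; eqbs; reflexivity).
  rewrite csum_scal. eqbs. ring.
Qed.
End Rows.

End F.
Import F.

Module Cc.

Set Default Proof Using "All".
Section Ops.
Variable U : C * C -> Prop.
Hypothesis hU : open U.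

Notation Sm := (holo_on U).
Notation "f == g" := (eqU U f g) (at level 70).

Lemma Sm_gen f : Sm f -> gen U f. Proof. apply gen_h. Qed.
Lemma Sm_of_gen f : gen U f -> Sm f. Proof. apply (holo_of_gen U hU). Qed.
Lemma Sm_add f g : Sm f -> Sm g -> Sm (fadd f g).
Proof. intros; apply Sm_of_gen, gen_add; apply Sm_gen; auto. Qed.
Lemma Sm_scal a f : Sm f -> Sm (fscal a f).
Proof. intros; apply Sm_of_gen, gen_scal; apply Sm_gen; auto. Qed.
Lemma Sm_x1 f : Sm f -> Sm (fmul (fun t1 _ => t1) f).
Proof. intros; apply Sm_of_gen, gen_x1; apply Sm_gen; auto. Qed.
Lemma Sm_x2 f : Sm f -> Sm (fmul (fun _ t2 => t2) f).
Proof. intros; apply Sm_of_gen, gen_x2; apply Sm_gen; auto. Qed.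
Lemma Sm_ext f g : Sm f -> f == g -> Sm g.
Proof. intros; eapply Sm_of_gen, gen_ext; [apply Sm_gen|]; eauto. Qed.
Lemma Sm_D1 f : Sm f -> Sm (D1 f). Proof. destruct 1; auto. Qed.
Lemma Sm_D2 f : Sm f -> Sm (D2 f). Proof. destruct 1; auto. Qed.
Lemma Sm_delta1 f : Sm f -> Sm (delta1 f).
Proof. intros; apply (Sm_x1 (D1 f)), Sm_D1; auto. Qed.
Lemma Sm_delta2 f : Sm f -> Sm (delta2 f).
Proof.
  intros H. apply Sm_ext with (fadd (fmul (fun _ t2 => t2) (D2 f)) (fscal (-1) (D2 f))).
  apply Sm_add. apply Sm_x2, Sm_D2; auto. apply Sm_scal, Sm_D2; auto.
  intros a b _. unfold fadd, fmul, fscal, delta2. ring.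
Qed.
Lemma Sm_opc L a f : Sm (L f) -> Sm f -> Sm (opc L a f).
Proof. intros; apply (Sm_add (L f) (fscal a f)); auto; apply Sm_scal; auto. Qed.

Lemma eqU_refl' f : f == f. Proof. apply eqU_refl. Qed.
Lemma eqU_sym' f g : f == g -> g == f. Proof. apply eqU_sym. Qed.
Lemma eqU_trans' f g h : f == g -> g == h -> f == h. Proof. apply eqU_trans. Qed.

Lemma delta1_ext f g : f == g -> delta1 f == delta1 g.
Proof. intros H a b h. unfold delta1. rewrite (D1_ext U hU f g H a b h). reflexivity. Qed.
Lemma delta2_ext f g : f == g -> delta2 f == delta2 g.
Proof. intros H a b h. unfold delta2. rewrite (D2_ext U hU f g H a b h). reflexivity. Qed.
Lemma delta1_add f g : Sm f -> Sm g -> delta1 (fadd f g) == fadd (delta1 f) (delta1 g).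
Proof. intros Hf Hg a b h. unfold delta1. rewrite (D1_add U hU f g) by (auto; apply Sm_gen; auto).
  unfold fadd. ring. Qed.
Lemma delta2_add f g : Sm f -> Sm g -> delta2 (fadd f g) == fadd (delta2 f) (delta2 g).
Proof. intros Hf Hg a b h. unfold delta2. rewrite (D2_add U hU f g) by (auto; apply Sm_gen; auto).
  unfold fadd. ring. Qed.
Lemma delta1_scal k f : Sm f -> delta1 (fscal k f) == fscal k (delta1 f).
Proof. intros Hf a b h. unfold delta1. rewrite (D1_scal U hU k f) by (auto; apply Sm_gen; auto).
  unfold fscal. ring. Qed.
Lemma delta2_scal k f : Sm f -> delta2 (fscal k f) == fscal k (delta2 f).
Proof. intros Hf a b h. unfold delta2. rewrite (D2_scal U hU k f) by (auto; apply Sm_gen; auto).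
  unfold fscal. ring. Qed.
Lemma delta1_psi (psi : C -> C) f : Sm f ->
  delta1 (fun a b => psi b * f a b) == (fun a b => psi b * delta1 f a b).
Proof. intros Hf a b h. unfold delta1. rewrite (D1_psi U hU psi f) by (auto; apply Sm_gen; auto).
  ring. Qed.
Lemma delta2_psi (psi : C -> C) f : Sm f ->
  delta2 (fun a b => psi a * f a b) == (fun a b => psi a * delta2 f a b).
Proof. intros Hf a b h. unfold delta2. rewrite (D2_psi U hU psi f) by (auto; apply Sm_gen; auto).
  ring. Qed.
Lemma delta12 f : Sm f -> delta1 (delta2 f) == delta2 (delta1 f).
Proof.
  intros Hf a b h.
  assert (E1 := delta1_psi (fun t => t - 1) (D2 f) (Sm_D2 f Hf) a b h).
  assert (E2 := delta2_psi (fun t => t) (D1 f) (Sm_D1 f Hf) a b h).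
  unfold delta1, delta2 in *. simpl in *.
  change (a * D1 (fun a0 b0 => (b0 - 1) * D2 f a0 b0) a b = (b - 1) * D2 (fun a0 b0 => a0 * D1 f a0 b0) a b).
  rewrite E1, E2. rewrite (holo_comm U hU f Hf a b h). ring.
Qed.

Record Op (L : fn2 -> fn2) : Prop := {
  op_sm : forall f, Sm f -> Sm (L f);
  op_ext : forall f g, f == g -> L f == L g;
  op_add : forall f g, Sm f -> Sm g -> L (fadd f g) == fadd (L f) (L g);
  op_scal : forall k f, Sm f -> L (fscal k f) == fscal k (L f);
  op_d1 : forall f, Sm f -> L (delta1 f) == delta1 (L f);
  op_d2 : forall f, Sm f -> L (delta2 f) == delta2 (L f) }.

Definition Comm (L K : fn2 -> fn2) := forall f, Sm f -> L (K f) == K (L f).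

Lemma fadd_ext f f' g g' : f == f' -> g == g' -> fadd f g == fadd f' g'.
Proof. intros H1 H2 a b h. unfold fadd. rewrite H1, H2; auto. Qed.
Lemma fscal_ext k f f' : f == f' -> fscal k f == fscal k f'.
Proof. intros H1 a b h. unfold fscal. rewrite H1; auto. Qed.

Lemma Op_delta1 : Op delta1.
Proof.
  constructor.
  - apply Sm_delta1.
  - apply delta1_ext.
  - apply delta1_add.
  - apply delta1_scal.
  - intros; apply eqU_refl.
  - apply delta12.
Qed.

Lemma Op_delta2 : Op delta2.
Proof.
  constructor.
  - apply Sm_delta2.
  - apply delta2_ext.
  - apply delta2_add.
  - apply delta2_scal.
  - intros; apply eqU_sym, delta12; auto.
  - intros; apply eqU_refl.
Qed.

Lemma Op_sum L K : Op L -> Op K -> Op (fun f => fadd (L f) (K f)).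
Proof.
  intros HL HK. constructor.
  - intros; apply Sm_add; [apply (op_sm _ HL)|apply (op_sm _ HK)]; auto.
  - intros; apply fadd_ext; [apply (op_ext _ HL)|apply (op_ext _ HK)]; auto.
  - intros f g Hf Hg a b h. cbv beta. unfold fadd at 1. rewrite (op_add _ HL f g Hf Hg a b h), (op_add _ HK f g Hf Hg a b h). unfold fadd; ring.
  - intros k f Hf a b h. cbv beta. unfold fadd at 1. rewrite (op_scal _ HL k f Hf a b h), (op_scal _ HK k f Hf a b h). unfold fadd, fscal; ring.
  - intros f Hf. eapply eqU_trans. apply fadd_ext; [apply (op_d1 _ HL)|apply (op_d1 _ HK)]; auto.
    apply eqU_sym, delta1_add; [apply (op_sm _ HL)|apply (op_sm _ HK)]; auto.
  - intros f Hf. eapply eqU_trans. apply fadd_ext; [apply (op_d2 _ HL)|apply (op_d2 _ HK)]; auto.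
    apply eqU_sym, delta2_add; [apply (op_sm _ HL)|apply (op_sm _ HK)]; auto.
Qed.

Lemma Op_scal k : Op (fscal k).
Proof.
  constructor.
  - apply Sm_scal.
  - intros; apply fscal_ext; auto.
  - intros f g _ _ a b _. unfold fscal, fadd. ring.
  - intros c f _ a b _. unfold fscal. ring.
  - intros; apply eqU_sym, delta1_scal; auto.
  - intros; apply eqU_sym, delta2_scal; auto.
Qed.

Lemma Op_id : Op (fun f => f).
Proof.
  constructor; intros; auto; apply eqU_refl.
Qed.

Lemma Op_opc L a : Op L -> Op (opc L a).
Proof. intros HL. apply (Op_sum L (fscal a) HL (Op_scal a)). Qed.

Lemma Op_comp L K : Op L -> Op K -> Op (fun f => L (K f)).
Proof.
  intros HL HK. constructor.
  - intros; apply (op_sm _ HL), (op_sm _ HK); auto.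
  - intros; apply (op_ext _ HL), (op_ext _ HK); auto.
  - intros f g Hf Hg. eapply eqU_trans. apply (op_ext _ HL), (op_add _ HK); auto.
    apply (op_add _ HL); apply (op_sm _ HK); auto.
  - intros k f Hf. eapply eqU_trans. apply (op_ext _ HL), (op_scal _ HK); auto.
    apply (op_scal _ HL); apply (op_sm _ HK); auto.
  - intros f Hf. eapply eqU_trans. apply (op_ext _ HL), (op_d1 _ HK); auto.
    apply (op_d1 _ HL); apply (op_sm _ HK); auto.
  - intros f Hf. eapply eqU_trans. apply (op_ext _ HL), (op_d2 _ HK); auto.
    apply (op_d2 _ HL); apply (op_sm _ HK); auto.
Qed.

Lemma Op_prodop_aux F : (forall j, Op (F j)) -> forall k lo, Op (prodop_aux F lo k).
Proof.
  intros HF. induction k; intros lo; simpl.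
  - apply Op_id.
  - apply (Op_comp (F lo) (prodop_aux F (S lo) k)); auto.
Qed.
Lemma Op_prodop F lo hi : (forall j, Op (F j)) -> Op (prodop F lo hi).
Proof. intros; apply Op_prodop_aux; auto. Qed.

Lemma Comm_delta1 L : Op L -> Comm L delta1. Proof. intros HL; exact (op_d1 _ HL). Qed.
Lemma Comm_delta2 L : Op L -> Comm L delta2. Proof. intros HL; exact (op_d2 _ HL). Qed.
Lemma Comm_sum L K1 K2 : Op L -> Op K1 -> Op K2 -> Comm L K1 -> Comm L K2 ->
  Comm L (fun f => fadd (K1 f) (K2 f)).
Proof.
  intros HL H1 H2 C1 C2 f Hf. eapply eqU_trans. apply (op_add _ HL); [apply (op_sm _ H1)|apply (op_sm _ H2)]; auto.
  apply fadd_ext; auto.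
Qed.
Lemma Comm_scal L k : Op L -> Comm L (fscal k).
Proof. intros HL f Hf; apply (op_scal _ HL); auto. Qed.
Lemma Comm_opc L K a : Op L -> Op K -> Comm L K -> Comm L (opc K a).
Proof. intros HL HK CK f Hf. exact (Comm_sum L K (fscal a) HL HK (Op_scal a) CK (Comm_scal L a HL) f Hf). Qed.
Lemma Comm_comp L K1 K2 : Op L -> Op K1 -> Op K2 -> Comm L K1 -> Comm L K2 -> Comm L (fun f => K1 (K2 f)).
Proof.
  intros HL H1 H2 C1 C2 f Hf. eapply eqU_trans. apply C1; apply (op_sm _ H2); auto.
  apply (op_ext _ H1). apply C2; auto.
Qed.
Lemma Comm_id L : Comm L (fun f => f). Proof. intros f _; apply eqU_refl. Qed.
Lemma Comm_prodop_aux L F : Op L -> (forall j, Op (F j)) -> (forall j, Comm L (F j)) ->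
  forall k lo, Comm L (prodop_aux F lo k).
Proof.
  intros HL HF CF. induction k; intros lo; simpl.
  - apply Comm_id.
  - apply (Comm_comp L (F lo) (prodop_aux F (S lo) k)); auto. apply Op_prodop_aux; auto.
Qed.
Lemma Comm_prodop L F lo hi : Op L -> (forall j, Op (F j)) -> (forall j, Comm L (F j)) ->
  Comm L (prodop F lo hi).
Proof. intros; apply Comm_prodop_aux; auto. Qed.

Definition Psi2 (L : fn2 -> fn2) := forall (psi : C -> C) f, Sm f ->
  L (fun a b => psi b * f a b) == (fun a b => psi b * L f a b).
Definition Psi1 (L : fn2 -> fn2) := forall (psi : C -> C) f, Sm f ->
  L (fun a b => psi a * f a b) == (fun a b => psi a * L f a b).

Lemma Psi2_opc1 a : Psi2 (opc delta1 a).
Proof. intros psi f Hf x y h. unfold opc. rewrite (delta1_psi psi f Hf x y h). ring. Qed.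
Lemma Psi1_opc2 a : Psi1 (opc delta2 a).
Proof. intros psi f Hf x y h. unfold opc. rewrite (delta2_psi psi f Hf x y h). ring. Qed.
Lemma Psi2_prodop_aux F : (forall j, Op (F j)) -> (forall j, Psi2 (F j)) -> forall k lo, Psi2 (prodop_aux F lo k).
Proof.
  intros HF PF. induction k; intros lo; simpl.
  - intros psi f _ ; apply eqU_refl.
  - intros psi f Hf. eapply eqU_trans. apply (op_ext _ (HF lo)). apply IHk; auto.
    apply PF. apply (op_sm _ (Op_prodop_aux F HF k (S lo))); auto.
Qed.
Lemma Psi2_prodop F lo hi : (forall j, Op (F j)) -> (forall j, Psi2 (F j)) -> Psi2 (prodop F lo hi).
Proof. intros; apply Psi2_prodop_aux; auto. Qed.

End Ops.

End Cc.
Import Cc.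

Module D.

Set Default Proof Using "All".
Section Core.
Variable U : C * C -> Prop.
Hypothesis hU : open U.
Variables (n : nat) (ka rho : nat -> C).

Notation Sm := (holo_on U).
Notation "f == g" := (eqU U f g) (at level 70).

Definition Pn g := prodop (Bop ka rho) 1 n g.
Definition Qn g := prodop (Cop ka rho) 1 n g.
Definition Xo i g := prodop (Bop ka rho) (S i) n (prodop (Cop ka rho) 1 (i-1) g).
Definition Yo i g := prodop (Bop ka rho) (S i) n (prodop (Cop ka rho) 1 i g).
Definition Ko i g := if Nat.eqb i 1 then Cop ka rho 1 g else delta1 g.
Definition Mo i g := Xo i (Ko i g).

Lemma OpB j : Op U (Bop ka rho j). Proof. apply (Op_opc U hU), (Op_delta1 U hU). Qed.
Lemma OpC j : Op U (Cop ka rho j). Proof. apply (Op_opc U hU), (Op_delta1 U hU). Qed.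
Lemma OpPB lo hi : Op U (prodop (Bop ka rho) lo hi). Proof. apply (Op_prodop U hU); intros; apply OpB. Qed.
Lemma OpPC lo hi : Op U (prodop (Cop ka rho) lo hi). Proof. apply (Op_prodop U hU); intros; apply OpC. Qed.
Lemma OpP : Op U Pn. Proof. apply OpPB. Qed.
Lemma OpQ : Op U Qn. Proof. apply OpPC. Qed.
Lemma OpX i : Op U (Xo i). Proof. unfold Xo. apply (Op_comp U hU); [apply OpPB|apply OpPC]. Qed.
Lemma OpY i : Op U (Yo i). Proof. unfold Yo. apply (Op_comp U hU); [apply OpPB|apply OpPC]. Qed.
Lemma OpK i : Op U (Ko i).
Proof.
  unfold Ko. destruct (Nat.eqb i 1).
  - apply OpC.
  - apply (Op_delta1 U hU).
Qed.
Lemma OpM i : Op U (Mo i). Proof. unfold Mo. apply (Op_comp U hU); [apply OpX|apply OpK]. Qed.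

Lemma CommB L j : Op U L -> Comm U L (Bop ka rho j).
Proof. intros HL. apply (Comm_opc U hU); auto. apply (Op_delta1 U hU). apply (Comm_delta1 U hU); auto. Qed.
Lemma CommC L j : Op U L -> Comm U L (Cop ka rho j).
Proof. intros HL. apply (Comm_opc U hU); auto. apply (Op_delta1 U hU). apply (Comm_delta1 U hU); auto. Qed.
Lemma CommPB L lo hi : Op U L -> Comm U L (prodop (Bop ka rho) lo hi).
Proof. intros HL. apply (Comm_prodop U hU); auto. intros; apply OpB. intros; apply CommB; auto. Qed.
Lemma CommPC L lo hi : Op U L -> Comm U L (prodop (Cop ka rho) lo hi).
Proof. intros HL. apply (Comm_prodop U hU); auto. intros; apply OpC. intros; apply CommC; auto. Qed.
Lemma CommX L i : Op U L -> Comm U L (Xo i).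
Proof. intros HL. unfold Xo. apply (Comm_comp U hU); auto. apply OpPB. apply OpPC. apply CommPB; auto. apply CommPC; auto. Qed.
Lemma CommY L i : Op U L -> Comm U L (Yo i).
Proof. intros HL. unfold Yo. apply (Comm_comp U hU); auto. apply OpPB. apply OpPC. apply CommPB; auto. apply CommPC; auto. Qed.
Lemma CommK L i : Op U L -> Comm U L (Ko i).
Proof. intros HL. unfold Ko. destruct (Nat.eqb i 1). apply CommC; auto. apply (Comm_delta1 U hU); auto. Qed.
Lemma CommM L i : Op U L -> Comm U L (Mo i).
Proof. intros HL. unfold Mo. apply (Comm_comp U hU); auto. apply OpX. apply OpK. apply CommX; auto. apply CommK; auto. Qed.

Lemma c_ne1 i : i <> 1%nat -> c_ ka rho i = - rho 1%nat + rho i + 1.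
Proof. intros H. unfold c_. destruct (Nat.eqb_spec i 1); [contradiction|reflexivity]. Qed.

Lemma Y_C i g : (1 <= i <= n)%nat -> Sm g -> Yo i g == Cop ka rho i (Xo i g).
Proof.
  intros Hi Hg. unfold Yo.
  replace i with (S (i - 1)) at 2 by lia. rewrite prodop_snoc by lia.
  replace (S (i - 1)) with i by lia.
  apply eqU_sym. exact (CommX (Cop ka rho i) i (OpC i) g Hg).
Qed.

Lemma Y_B i g : (1 <= i <= n)%nat -> Yo (i - 1) g = Bop ka rho i (Xo i g).
Proof.
  intros Hi. unfold Yo, Xo. replace (S (i - 1)) with i by lia.
  rewrite prodop_cons by lia. reflexivity.
Qed.

Lemma YN h : Yo n h = Qn h.
Proof. unfold Yo, Qn. rewrite prodop_nil by lia. reflexivity. Qed.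

Lemma P_X1 h : (1 <= n)%nat -> Pn h = Bop ka rho 1 (Xo 1 h).
Proof. intros Hn. unfold Pn. rewrite prodop_cons by lia. reflexivity. Qed.

Lemma M_ne1 j g : j <> 1%nat -> Mo j g = Xo j (delta1 g).
Proof. intros H. unfold Mo, Ko. destruct (Nat.eqb_spec j 1); [contradiction|reflexivity]. Qed.

Lemma TEL0 j h a b : (2 <= j <= n)%nat -> U (a,b) -> Sm h ->
  kr ka rho j * Xo j h a b = Yo j h a b - Yo (j - 1) h a b.
Proof.
  intros Hj Hab Hh. rewrite (Y_C j h) by (auto; lia). rewrite Y_B by lia.
  unfold Cop, Bop, opc, b_, kr. rewrite c_ne1 by lia. ring.
Qed.

Lemma TELS i m g a b : (1 <= i)%nat -> (i <= m <= n)%nat -> U (a,b) -> Sm g ->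
  csum (fun j => kr ka rho j * Mo j g a b) (S i) m = Yo m (delta1 g) a b - Yo i (delta1 g) a b.
Proof.
  intros Hi Hm Hab Hg.
  rewrite <- (csum_tel (fun j => Yo j (delta1 g) a b) i m) by lia.
  apply csum_ext. intros j Hj. rewrite M_ne1 by lia. apply TEL0; auto. lia.
  apply (Sm_delta1 U hU); auto.
Qed.

Lemma fzero_ext f : (forall a b, U (a,b) -> f a b = RtoC 0) -> f == fscal (RtoC 0) f.
Proof. intros H a b h. unfold fscal. rewrite H; auto. ring. Qed.

Lemma KY g : (1 <= n)%nat -> Sm g -> forall a b, U (a,b) ->
  kr ka rho 1 * Yo 1 g a b - Yo 1 (delta1 g) a b = - Pn (Cop ka rho 1 g) a b.
Proof.
  intros Hn Hg a b Hab.
  change (Yo 1 g) with (Xo 1 (Cop ka rho 1 g)).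
  change (Yo 1 (delta1 g)) with (Xo 1 (Cop ka rho 1 (delta1 g))).
  set (L := fun h => Xo 1 (Cop ka rho 1 h)).
  assert (HL : Op U L) by (unfold L; apply (Op_comp U hU (Xo 1) (Cop ka rho 1)); [apply OpX|apply OpC]).
  change (kr ka rho 1 * L g a b - L (delta1 g) a b = - Pn (Cop ka rho 1 g) a b).
  assert (E : L (Bop ka rho 1 g) a b = Pn (Cop ka rho 1 g) a b).
  { rewrite P_X1 by auto. unfold L.
    rewrite (op_ext U _ (OpX 1) _ _ (CommB (Cop ka rho 1) 1 (OpC 1) g Hg) a b Hab).
    apply (CommB (Xo 1) 1 (OpX 1)); auto. apply (op_sm U _ (OpC 1)); auto. }
  rewrite <- E. unfold Bop, opc.
  change (fun t1 t2 => delta1 g t1 t2 + b_ ka rho 1 * g t1 t2) with (fadd (delta1 g) (fscal (b_ ka rho 1) g)).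
  assert (H1 : Sm (delta1 g)) by (apply (Sm_delta1 U hU); auto).
  assert (H2 : Sm (fscal (b_ ka rho 1) g)) by (apply (Sm_scal U hU); auto).
  rewrite (op_add U _ HL _ _ H1 H2 a b Hab).
  unfold fadd. rewrite (op_scal U _ HL _ _ Hg a b Hab). unfold fscal, kr, b_. ring.
Qed.

Lemma ROWc i g a b : (1 <= i <= n)%nat -> U (a,b) -> Sm g ->
  delta1 (Mo i g) a b + (rho i - rho 1%nat) * Mo i g a b
  + csum (fun j => kr ka rho j * Mo j g a b) (S i) n = delta1 (Qn g) a b.
Proof.
  intros Hi Hab Hg. rewrite TELS by (auto; lia). rewrite YN.
  assert (EQ : delta1 (Qn g) a b = Qn (delta1 g) a b) by exact (CommPC delta1 1 n (Op_delta1 U hU) g Hg a b Hab).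
  rewrite EQ.
  assert (E : delta1 (Mo i g) a b + (rho i - rho 1%nat) * Mo i g a b = Yo i (delta1 g) a b).
  { destruct (Nat.eq_dec i 1) as [->|Hne].
    - change (Mo 1 g) with (Yo 1 g).
      rewrite <- (CommY delta1 1 (Op_delta1 U hU) g Hg a b Hab). ring.
    - rewrite M_ne1 by auto. rewrite (Y_C i (delta1 g) Hi (Sm_delta1 U hU g Hg) a b Hab).
      unfold Cop, opc. rewrite c_ne1 by auto. ring. }
  rewrite E. ring.
Qed.

Lemma TEL g a b : (1 <= n)%nat -> U (a,b) -> Sm g ->
  csum (fun j => kr ka rho j * Mo j g a b) 1 n = delta1 (Qn g) a b - Cop ka rho 1 (Pn g) a b.
Proof.
  intros Hn Hab Hg. rewrite csum_cons by auto.
  rewrite TELS by (auto; lia). rewrite YN.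
  assert (EQ : delta1 (Qn g) a b = Qn (delta1 g) a b) by exact (CommPC delta1 1 n (Op_delta1 U hU) g Hg a b Hab).
  rewrite EQ.
  assert (EP : Pn (Cop ka rho 1 g) a b = Cop ka rho 1 (Pn g) a b) by exact (CommC Pn 1 OpP g Hg a b Hab).
  rewrite <- EP.
  change (Mo 1 g) with (Yo 1 g).
  pose proof (KY g Hn Hg a b Hab) as HK. replace (Pn (Cop ka rho 1 g) a b) with (- (kr ka rho 1 * Yo 1 g a b - Yo 1 (delta1 g) a b)) by (rewrite HK; ring). ring.
Qed.

Lemma ROW2c i g a b : (1 <= i <= n)%nat -> U (a,b) -> Sm g ->
  csum (fun j => kr ka rho j * Mo j g a b) 1 (i - 1)
  = Mo i (Cop ka rho 1 g) a b + (ka 0%nat - ka i) * Mo i g a b - Pn (Cop ka rho 1 g) a b.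
Proof.
  intros Hi Hab Hg.
  assert (Hg1 : Sm (Cop ka rho 1 g)) by (apply (op_sm U _ (OpC 1)); auto).
  destruct (Nat.eq_dec i 1) as [->|Hne].
  - rewrite csum_nil by lia. rewrite P_X1 by lia.
    change (Mo 1 (Cop ka rho 1 g)) with (Xo 1 (Cop ka rho 1 (Cop ka rho 1 g))).
    change (Mo 1 g) with (Xo 1 (Cop ka rho 1 g)).
    rewrite <- (CommX (Cop ka rho 1) 1 (OpC 1) (Cop ka rho 1 g) Hg1 a b Hab).
    unfold Bop, Cop, opc, b_, c_. simpl. ring.
  - rewrite csum_cons by lia. rewrite TELS by (auto; lia).
    change (Mo 1 g) with (Yo 1 g).
    assert (HK := KY g ltac:(lia) Hg a b Hab).
    rewrite Y_B by lia.
    rewrite !M_ne1 by auto.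
    assert (E1 : Xo i (delta1 (Cop ka rho 1 g)) a b = Cop ka rho 1 (Xo i (delta1 g)) a b).
    { rewrite (op_ext U _ (OpX i) _ _ (CommC delta1 1 (Op_delta1 U hU) g Hg) a b Hab).
      symmetry. apply (CommX (Cop ka rho 1) i (OpC 1)); auto. apply (Sm_delta1 U hU); auto. }
    rewrite E1.
    replace (kr ka rho 1 * Yo 1 g a b + (Bop ka rho i (Xo i (delta1 g)) a b - Yo 1 (delta1 g) a b))
      with ((kr ka rho 1 * Yo 1 g a b - Yo 1 (delta1 g) a b) + Bop ka rho i (Xo i (delta1 g)) a b) by ring.
    rewrite HK. unfold Bop, Cop, opc, b_, c_. simpl. ring.
Qed.
End Core.

End D.
Import D.

Module E.

Set Default Proof Using "All".
Section Main.
Variable U : C * C -> Prop.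
Hypothesis hU : open U.
Variables (n : nat) (th2 th3 : C) (ka rho : nat -> C) (z : fn2).
Hypothesis hn : (1 <= n)%nat.
Hypothesis hz : holo_on U z.
Hypothesis hE1 : forall t1 t2, U (t1, t2) -> eq1 n th2 th3 ka rho z t1 t2 = RtoC 0.
Hypothesis hE2 : forall t1 t2, U (t1, t2) -> eq2 th2 th3 ka rho z t1 t2 = RtoC 0.

Notation Sm := (holo_on U).
Notation "f == g" := (eqU U f g) (at level 70).
Notation w := (wvec n th2 th3 ka rho z).
Notation Pn := (Pn n ka rho).
Notation Qn := (Qn n ka rho).
Notation Mo := (Mo n ka rho).
Notation kr := (kr ka rho).

Definition zt := opc delta2 (b' th2) z.
Definition zc := opc delta2 (c' th2 th3 - 1) z.
Definition Sop := opc (fun f => fadd (delta1 f) (delta2 f)) (c_ ka rho 1 + c' th2 th3 - 2).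

Lemma Sm_zt : Sm zt. Proof. apply (Sm_opc U hU); auto. apply (Sm_delta2 U hU); auto. Qed.
Lemma Sm_zc : Sm zc. Proof. apply (Sm_opc U hU); auto. apply (Sm_delta2 U hU); auto. Qed.
Lemma OpD2c c : Op U (opc delta2 c). Proof. apply (Op_opc U hU), (Op_delta2 U hU). Qed.
Lemma OpS : Op U Sop.
Proof. apply (Op_opc U hU). apply (Op_sum U hU); [apply (Op_delta1 U hU)|apply (Op_delta2 U hU)]. Qed.
Lemma CommS L : Op U L -> Comm U L Sop.
Proof.
  intros HL. apply (Comm_opc U hU); auto.
  apply (Op_sum U hU); [apply (Op_delta1 U hU)|apply (Op_delta2 U hU)].
  apply (Comm_sum U hU); auto. apply (Op_delta1 U hU). apply (Op_delta2 U hU).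
  apply (Comm_delta1 U hU); auto. apply (Comm_delta2 U hU); auto.
Qed.
Lemma CommD2c L c : Op U L -> Comm U L (opc delta2 c).
Proof. intros HL. apply (Comm_opc U hU); auto. apply (Op_delta2 U hU). apply (Comm_delta2 U hU); auto. Qed.

Lemma Lexp L c a b : Op U L -> U (a,b) ->
  L (opc delta2 c z) a b = L (delta2 z) a b + c * L z a b.
Proof.
  intros HL Hab.
  change (opc delta2 c z) with (fadd (delta2 z) (fscal c z)).
  rewrite (op_add U _ HL _ _ (Sm_delta2 U hU z hz) (Sm_scal U hU c z hz) a b Hab).
  unfold fadd. rewrite (op_scal U _ HL _ _ hz a b Hab). reflexivity.
Qed.

Lemma OpBj j : Op U (Bop ka rho j). Proof. apply (OpB U hU n). Qed.
Lemma Psi2P : Psi2 U Pn.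
Proof. apply (Psi2_prodop U hU). intros; apply OpBj. intros; apply (Psi2_opc1 U hU). Qed.
Lemma Psi2M i : Psi2 U (Mo i).
Proof.
  intros psi f Hf. unfold D.Mo, Xo, Ko.
  assert (HPB : forall lo hi, Psi2 U (prodop (Bop ka rho) lo hi)).
  { intros; apply (Psi2_prodop U hU). intros; apply OpBj. intros; apply (Psi2_opc1 U hU). }
  assert (HPC : forall lo hi, Psi2 U (prodop (Cop ka rho) lo hi)).
  { intros; apply (Psi2_prodop U hU). intros; apply (OpC U hU n). intros; apply (Psi2_opc1 U hU). }
  assert (HK : Psi2 U (fun g => if Nat.eqb i 1 then Cop ka rho 1 g else delta1 g)).
  { destruct (Nat.eqb i 1). apply (Psi2_opc1 U hU).
    intros psi' g Hg. apply (delta1_psi U hU); auto. }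
  assert (HOK : Op U (fun g => if Nat.eqb i 1 then Cop ka rho 1 g else delta1 g)) by apply (OpK U hU n).
  eapply eqU_trans. apply (op_ext U _ (OpPB U hU n ka rho _ _)).
  apply (op_ext U _ (OpPC U hU n ka rho _ _)). apply HK; auto.
  eapply eqU_trans. apply (op_ext U _ (OpPB U hU n ka rho _ _)). apply HPC. apply (op_sm U _ HOK); auto.
  apply HPB. apply (op_sm U _ (OpPC U hU n ka rho _ _)), (op_sm U _ HOK); auto.
Qed.

Lemma w_i i : (1 <= i <= n)%nat -> w i = fscal (kr i * th3) (Mo i z).
Proof.
  intros Hi. unfold wvec.
  destruct (Nat.eqb_spec i 0) as [|_]; [lia|].
  destruct (Nat.eqb_spec i 1) as [->|Hne].
  - unfold D.Mo, Xo, Ko. simpl. apply functional_extensionality; intro a.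
    apply functional_extensionality; intro b. unfold fscal. f_equal.
    unfold b_, b', c', Defs.kr. ring.
  - destruct (Nat.leb_spec i n) as [_|]; [|lia].
    rewrite (M_ne1 U hU n ka rho i z Hne). unfold Xo.
    apply functional_extensionality; intro a. apply functional_extensionality; intro b.
    unfold fscal. f_equal. rewrite (c_ne1 U hU n ka rho i Hne). unfold b_, b', c', Defs.kr. ring.
Qed.

Lemma w_ni i : (1 <= i <= n)%nat -> w (n + i) = fscal (- kr i) (Mo i zt).
Proof.
  intros Hi. unfold wvec.
  destruct (Nat.eqb_spec (n + i) 0) as [|_]; [lia|].
  destruct (Nat.eqb_spec (n + i) 1) as [|_]; [lia|].
  destruct (Nat.leb_spec (n + i) n) as [|_]; [lia|].
  destruct (Nat.eqb_spec (n + i) (S n)) as [He|Hne].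
  - assert (i = 1%nat) by lia. subst i.
    unfold D.Mo, Xo, Ko. simpl. apply functional_extensionality; intro a.
    apply functional_extensionality; intro b. unfold fscal. f_equal.
    unfold b_, Defs.kr. ring.
  - replace (n + i - n)%nat with i by lia.
    rewrite (M_ne1 U hU n ka rho i zt ltac:(lia)). unfold Xo.
    apply functional_extensionality; intro a. apply functional_extensionality; intro b.
    unfold fscal. f_equal. rewrite (c_ne1 U hU n ka rho i ltac:(lia)). unfold b_, Defs.kr. ring.
Qed.

Lemma w_0 : w 0 = fscal (-1) (Pn zc).
Proof. reflexivity. Qed.

Lemma SmM i g : Sm g -> Sm (Mo i g). Proof. intros; apply (op_sm U _ (OpM U hU n ka rho i)); auto. Qed.

Lemma Csub0 (x y : C) : x - y = RtoC 0 -> x = y.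
Proof. intros H. replace x with ((x - y) + y) by ring. rewrite H. ring. Qed.

Lemma E1' a b : U (a,b) -> a * Sop (Pn z) a b = delta1 (Qn z) a b.
Proof.
  intros Hab. pose proof (hE1 a b Hab) as H. unfold eq1, fsub, fmul in H.
  unfold Sop, D.Pn, D.Qn. apply Csub0 in H. exact H.
Qed.
Lemma E2' a b : U (a,b) -> (1 - b) * Sop zt a b = delta2 zc a b.
Proof.
  intros Hab. pose proof (hE2 a b Hab) as H. unfold eq2, fsub, fmul in H.
  unfold Sop, zt, zc. apply Csub0 in H. exact H.
Qed.

Lemma SmPz : Sm (Pn z). Proof. apply (op_sm U _ (OpP U hU n ka rho)); auto. Qed.
Lemma SmP g : Sm g -> Sm (Pn g). Proof. intros; apply (op_sm U _ (OpP U hU n ka rho)); auto. Qed.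
Lemma SmS g : Sm g -> Sm (Sop g). Proof. intros; apply (op_sm U _ OpS); auto. Qed.
Lemma SmC1 g : Sm g -> Sm (Cop ka rho 1 g). Proof. intros; apply (op_sm U _ (OpC U hU n ka rho 1)); auto. Qed.

Lemma J1 a b : U (a,b) ->
  csum (fun j => w j a b) 1 n = th3 * (delta1 (Qn z) a b - Cop ka rho 1 (Pn z) a b).
Proof.
  intros Hab.
  rewrite (csum_ext _ (fun j => th3 * (kr j * Mo j z a b))) by
    (intros j Hj; rewrite w_i by lia; unfold fscal; ring).
  rewrite csum_scal. rewrite (TEL U hU n ka rho z a b hn Hab hz). reflexivity.
Qed.

Lemma J2 a b : U (a,b) ->
  csum (fun j => w (n + j)%nat a b) 1 n = - (delta1 (Qn zt) a b - Cop ka rho 1 (Pn zt) a b).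
Proof.
  intros Hab.
  rewrite (csum_ext _ (fun j => - (kr j * Mo j zt a b))) by
    (intros j Hj; rewrite w_ni by lia; unfold fscal; ring).
  rewrite csum_opp. rewrite (TEL U hU n ka rho zt a b hn Hab Sm_zt). reflexivity.
Qed.

Lemma ROW1 i a b : (1 <= i <= n)%nat -> U (a,b) ->
  delta1 (w i) a b + (rho i - rho 1%nat) * w i a b + kr i * csum (fun j => w j a b) (S i) n
  = kr i * th3 * delta1 (Qn z) a b.
Proof.
  intros Hi Hab.
  rewrite (csum_ext _ (fun j => th3 * (kr j * Mo j z a b))) by
    (intros j Hj; rewrite w_i by lia; unfold fscal; ring).
  rewrite csum_scal. rewrite (w_i i Hi).
  rewrite (delta1_scal U hU _ _ (SmM i z hz) a b Hab). unfold fscal.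
  rewrite <- (ROWc U hU n ka rho i z a b Hi Hab hz). ring.
Qed.

Lemma ROW2 i a b : (1 <= i <= n)%nat -> U (a,b) ->
  delta1 (w (n + i)%nat) a b + (rho i - rho 1%nat) * w (n + i)%nat a b
  + kr i * csum (fun j => w (n + j)%nat a b) (S i) n
  = - kr i * delta1 (Qn zt) a b.
Proof.
  intros Hi Hab.
  rewrite (csum_ext _ (fun j => - (kr j * Mo j zt a b))) by
    (intros j Hj; rewrite w_ni by lia; unfold fscal; ring).
  rewrite csum_opp. rewrite (w_ni i Hi).
  rewrite (delta1_scal U hU _ _ (SmM i zt Sm_zt) a b Hab). unfold fscal.
  rewrite <- (ROWc U hU n ka rho i zt a b Hi Hab Sm_zt). ring.
Qed.

Lemma F5 a b : U (a,b) -> Pn zc a b + Cop ka rho 1 (Pn z) a b = Sop (Pn z) a b.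
Proof.
  intros Hab.
  rewrite <- (CommC U hU n ka rho Pn 1 (OpP U hU n ka rho) z hz a b Hab).
  pose proof (op_add U _ (OpP U hU n ka rho) _ _ Sm_zc (SmC1 z hz) a b Hab) as H.
  unfold fadd at 2 in H. rewrite <- H.
  rewrite <- (CommS Pn (OpP U hU n ka rho) z hz a b Hab).
  apply (op_ext U _ (OpP U hU n ka rho)); auto.
  intros x y _. unfold fadd, zc, Sop, Cop, opc; cbv beta. unfold fadd. ring.
Qed.

Lemma J5 a b : U (a,b) ->
  a * (th3 * w 0%nat a b + csum (fun j => w j a b) 1 n) = (a - 1) * th3 * delta1 (Qn z) a b.
Proof.
  intros Hab. rewrite J1 by auto. rewrite w_0. unfold fscal.
  pose proof (F5 a b Hab) as H5. pose proof (E1' a b Hab) as H1.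
  replace (a * (th3 * (-1 * Pn zc a b) + th3 * (delta1 (Qn z) a b - Cop ka rho 1 (Pn z) a b)))
    with (th3 * (a * delta1 (Qn z) a b) - th3 * (a * (Pn zc a b + Cop ka rho 1 (Pn z) a b))) by ring.
  rewrite H5, H1. ring.
Qed.

Lemma J6 a b : U (a,b) -> delta1 (Qn zt) a b = a * Sop (Pn zt) a b.
Proof.
  intros Hab.
  set (L := fun h => delta1 (Qn h)).
  assert (HL : Op U L) by (unfold L; apply (Op_comp U hU); [apply (Op_delta1 U hU)|apply (OpQ U hU n ka rho)]).
  change (L zt a b = a * Sop (Pn zt) a b).
  unfold zt. rewrite (CommD2c L (b' th2) HL z hz a b Hab).
  assert (E : L z == (fun x y => x * Sop (Pn z) x y)).
  { intros x y hxy. unfold L. symmetry. apply E1'; auto. }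
  rewrite (op_ext U _ (OpD2c (b' th2)) _ _ E a b Hab).
  rewrite (Psi1_opc2 U hU (b' th2) (fun x => x) _ (SmS _ SmPz) a b Hab).
  f_equal. symmetry.
  set (L2 := fun h => Sop (Pn h)).
  assert (HL2 : Op U L2) by (unfold L2; apply (Op_comp U hU); [apply OpS|apply (OpP U hU n ka rho)]).
  exact (CommD2c L2 (b' th2) HL2 z hz a b Hab).
Qed.

Lemma T2S : (fun a b => b * Sop zt a b) == fadd (Cop ka rho 1 zt) (fscal (- th2) zc).
Proof.
  intros a b Hab.
  assert (H2 := E2' a b Hab).
  assert (HZT : delta2 zt a b = delta2 (delta2 z) a b + b' th2 * delta2 z a b)
    by exact (Lexp delta2 (b' th2) a b (Op_delta2 U hU) Hab).
  assert (HZC : delta2 zc a b = delta2 (delta2 z) a b + (c' th2 th3 - 1) * delta2 z a b)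
    by exact (Lexp delta2 (c' th2 th3 - 1) a b (Op_delta2 U hU) Hab).
  replace (b * Sop zt a b) with (Sop zt a b - (1 - b) * Sop zt a b) by ring.
  rewrite H2. unfold Sop, fadd, fscal, Cop, opc. cbv beta. unfold fadd.
  rewrite HZT, HZC. unfold zt, zc, opc, b', c'. ring.
Qed.

Lemma T2L L a b : Op U L -> Psi2 U L -> U (a,b) ->
  b * L (Sop zt) a b = L (Cop ka rho 1 zt) a b - th2 * L zc a b.
Proof.
  intros HL HP Hab.
  rewrite <- (HP (fun x => x) (Sop zt) (SmS zt Sm_zt) a b Hab).
  rewrite (op_ext U _ HL _ _ T2S a b Hab).
  rewrite (op_add U _ HL _ _ (SmC1 zt Sm_zt) (Sm_scal U hU _ _ Sm_zc) a b Hab).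
  unfold fadd. rewrite (op_scal U _ HL _ _ Sm_zc a b Hab). unfold fscal. ring.
Qed.

Lemma T2P a b : U (a,b) -> b * Sop (Pn zt) a b = Cop ka rho 1 (Pn zt) a b - th2 * Pn zc a b.
Proof.
  intros Hab.
  rewrite <- (CommS Pn (OpP U hU n ka rho) zt Sm_zt a b Hab).
  rewrite <- (CommC U hU n ka rho Pn 1 (OpP U hU n ka rho) zt Sm_zt a b Hab).
  apply T2L; auto. apply (OpP U hU n ka rho). apply Psi2P.
Qed.

Lemma J7 a b : U (a,b) ->
  th2 * w 0%nat a b + csum (fun j => w (n + j)%nat a b) 1 n = - (a - b) * Sop (Pn zt) a b.
Proof.
  intros Hab. rewrite J2 by auto. rewrite w_0. unfold fscal. rewrite J6 by auto.
  assert (H : Cop ka rho 1 (Pn zt) a b = b * Sop (Pn zt) a b + th2 * Pn zc a b)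
    by (rewrite T2P by auto; ring).
  rewrite H. ring.
Qed.

Lemma J8 a b : U (a,b) -> delta2 (w 0%nat) a b = (b - 1) * Sop (Pn zt) a b.
Proof.
  intros Hab. rewrite w_0.
  rewrite (delta2_scal U hU _ _ (SmP zc Sm_zc) a b Hab). unfold fscal.
  assert (X : delta2 (Pn zc) a b = Pn (delta2 zc) a b)
    by exact (CommPB U hU n ka rho delta2 1 n (Op_delta2 U hU) zc Sm_zc a b Hab).
  rewrite X.
  assert (E : delta2 zc == (fun x y => (1 - y) * Sop zt x y)).
  { intros x y h. symmetry. apply E2'; auto. }
  rewrite (op_ext U _ (OpP U hU n ka rho) _ _ E a b Hab).
  rewrite (Psi2P (fun y => 1 - y) _ (SmS zt Sm_zt) a b Hab).
  rewrite (CommS Pn (OpP U hU n ka rho) zt Sm_zt a b Hab). ring.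
Qed.

Lemma J9 i a b : (1 <= i <= n)%nat -> U (a,b) ->
  delta2 (w i) a b = th2 * w i a b - th3 * w (n + i)%nat a b.
Proof.
  intros Hi Hab. rewrite (w_i i Hi), (w_ni i Hi).
  rewrite (delta2_scal U hU _ _ (SmM i z hz) a b Hab). unfold fscal.
  rewrite (CommM U hU n ka rho delta2 i (Op_delta2 U hU) z hz a b Hab).
  unfold zt. rewrite (Lexp (Mo i) (b' th2) a b (OpM U hU n ka rho i) Hab).
  unfold b'. ring.
Qed.

Lemma LexpD2 L c a b : Op U L -> U (a,b) ->
  L (delta2 (opc delta2 c z)) a b = L (delta2 (delta2 z)) a b + c * L (delta2 z) a b.
Proof.
  intros HL Hab.
  assert (Hd : Sm (delta2 z)) by (apply (Sm_delta2 U hU); auto).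
  assert (E : delta2 (opc delta2 c z) == fadd (delta2 (delta2 z)) (fscal c (delta2 z))).
  { change (opc delta2 c z) with (fadd (delta2 z) (fscal c z)).
    eapply eqU_trans. apply (delta2_add U hU); auto. apply (Sm_scal U hU); auto.
    apply (fadd_ext U hU). apply eqU_refl. apply (delta2_scal U hU); auto. }
  rewrite (op_ext U _ HL _ _ E a b Hab).
  rewrite (op_add U _ HL _ _ (Sm_delta2 U hU _ Hd) (Sm_scal U hU _ _ Hd) a b Hab).
  unfold fadd. rewrite (op_scal U _ HL _ _ Hd a b Hab). reflexivity.
Qed.

Lemma J10 i a b : (1 <= i <= n)%nat -> U (a,b) ->
  b * (delta2 (w (n + i)%nat) a b + th2 * w i a b - th3 * w (n + i)%nat a b
       - kr i * (b - 1) * Sop (Pn zt) a b)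
  = (b - 1) * (- th2 * kr i * w 0%nat a b + th2 * w i a b
       - kr i * csum (fun j => w (n + j)%nat a b) 1 (i - 1)
       + (th2 + ka 0%nat - ka i) * w (n + i)%nat a b).
Proof.
  intros Hi Hab.
  rewrite (csum_ext _ (fun j => - (kr j * Mo j zt a b))) by
    (intros j Hj; rewrite w_ni by lia; unfold fscal; ring).
  rewrite csum_opp. rewrite (ROW2c U hU n ka rho i zt a b Hi Hab Sm_zt).
  rewrite w_0, (w_i i Hi), (w_ni i Hi).
  rewrite (delta2_scal U hU _ _ (SmM i zt Sm_zt) a b Hab). unfold fscal.
  rewrite (CommM U hU n ka rho delta2 i (Op_delta2 U hU) zt Sm_zt a b Hab).
  assert (HM := OpM U hU n ka rho i).
  unfold zt at 1. rewrite (LexpD2 (Mo i) (b' th2) a b HM Hab).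
  assert (HZC : Mo i (delta2 zc) a b = Mo i (delta2 (delta2 z)) a b + (c' th2 th3 - 1) * Mo i (delta2 z) a b)
    by exact (LexpD2 (Mo i) (c' th2 th3 - 1) a b HM Hab).
  assert (HE : Mo i (delta2 zc) a b = (1 - b) * Mo i (Sop zt) a b).
  { assert (E : delta2 zc == (fun x y => (1 - y) * Sop zt x y)).
    { intros x y h. symmetry. apply E2'; auto. }
    rewrite (op_ext U _ HM _ _ E a b Hab).
    apply (Psi2M i (fun y => 1 - y) _ (SmS zt Sm_zt) a b Hab). }
  assert (HA : Mo i (delta2 (delta2 z)) a b = (1 - b) * Mo i (Sop zt) a b - (c' th2 th3 - 1) * Mo i (delta2 z) a b)
    by (rewrite <- HE, HZC; ring).
  assert (HT := T2L (Mo i) a b HM (Psi2M i) Hab).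
  assert (HMC : Mo i (Cop ka rho 1 zt) a b = b * Mo i (Sop zt) a b + th2 * Mo i zc a b)
    by (rewrite HT; ring).
  assert (HP := T2P a b Hab).
  rewrite <- (CommC U hU n ka rho Pn 1 (OpP U hU n ka rho) zt Sm_zt a b Hab) in HP.
  assert (HPC : Pn (Cop ka rho 1 zt) a b = b * Sop (Pn zt) a b + th2 * Pn zc a b)
    by (rewrite HP; ring).
  rewrite HA, HMC, HPC.
  unfold zt. rewrite (Lexp (Mo i) (b' th2) a b HM Hab).
  unfold zc. rewrite (Lexp (Mo i) (c' th2 th3 - 1) a b HM Hab).
  unfold b', c'. ring.
Qed.

Lemma J0 a b : U (a,b) ->
  delta1 (w 0%nat) a b = (ka 0%nat + rho 1%nat) * w 0%nat a b
    + th3 * Cop ka rho 1 (Pn z) a b - Cop ka rho 1 (Pn zt) a b.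
Proof.
  intros Hab. rewrite w_0.
  rewrite (delta1_scal U hU _ _ (SmP zc Sm_zc) a b Hab). unfold fscal.
  set (L := fun h => Cop ka rho 1 (Pn h)).
  assert (HL : Op U L) by (unfold L; apply (Op_comp U hU); [apply (OpC U hU n ka rho)|apply (OpP U hU n ka rho)]).
  change (Cop ka rho 1 (Pn z) a b) with (L z a b).
  change (Cop ka rho 1 (Pn zt) a b) with (L zt a b).
  assert (HC : L zc a b = delta1 (Pn zc) a b + (c_ ka rho 1 - 1) * Pn zc a b) by reflexivity.
  replace (delta1 (Pn zc) a b) with (L zc a b - (c_ ka rho 1 - 1) * Pn zc a b) by (rewrite HC; ring).
  unfold zc at 1. rewrite (Lexp L (c' th2 th3 - 1) a b HL Hab).
  unfold zt. rewrite (Lexp L (b' th2) a b HL Hab).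
  unfold c_, b', c'. simpl. ring.
Qed.

Lemma Sm_w k : Sm (w k).
Proof.
  unfold wvec.
  repeat match goal with |- context [if ?c then _ else _] => destruct c end;
  apply (Sm_scal U hU);
  repeat (first [apply (op_sm U _ (OpPB U hU n ka rho _ _)) | apply (op_sm U _ (OpPC U hU n ka rho _ _))
                | apply (op_sm U _ (OpC U hU n ka rho _)) | apply (Sm_delta1 U hU) | apply (Sm_opc U hU)
                | apply (Sm_delta2 U hU) | exact hz]).
Qed.

Lemma RG a b : U (a,b) -> delta1 (Qn z) a b = a * (Cop ka rho 1 (Pn z) a b - w 0%nat a b).
Proof.
  intros Hab. rewrite <- (E1' a b Hab), <- (F5 a b Hab). rewrite w_0. unfold fscal. ring.
Qed.

Lemma RC a b : U (a,b) -> Cop ka rho 1 (Pn zt) a b = b * Sop (Pn zt) a b - th2 * w 0%nat a b.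
Proof. intros Hab. rewrite (T2P a b Hab), w_0. unfold fscal. ring. Qed.

Lemma creg (x A B : C) : x <> RtoC 0 -> x * A = x * B -> A = B.
Proof.
  intros Hx H. replace A with (/ x * (x * A)) by (field; auto).
  rewrite H. field; auto.
Qed.

Lemma Cneq_sub (x y : C) : x <> y -> x - y <> RtoC 0.
Proof. intros H E. apply H. apply Csub0. exact E. Qed.

End Main.

End E.
Import E.


Lemma Csub0' (x y : C) : x - y = RtoC 0 -> x = y.
Proof. intros H. replace x with ((x - y) + y) by ring. rewrite H. ring. Qed.
Lemma creg' (x A B : C) : x <> RtoC 0 -> x * A = x * B -> A = B.
Proof.
  intros Hx H. replace A with (/ x * (x * A)) by (field; auto).
  rewrite H. field; auto.
Qed.
Lemma Cneq_sub' (x y : C) : x <> y -> x - y <> RtoC 0.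
Proof. intros H E. apply H. apply Csub0'. exact E. Qed.

Theorem theorem3p3 (n : nat) (hn : (1 <= n)%nat)
  (th2 th3 : C) (ka rho : nat -> C)
  (U : C * C -> Prop) (hU : open U) (z : fn2) (hz : holo_on U z)
  (hE1 : forall t1 t2, U (t1, t2) -> eq1 n th2 th3 ka rho z t1 t2 = RtoC 0)
  (hE2 : forall t1 t2, U (t1, t2) -> eq2 th2 th3 ka rho z t1 t2 = RtoC 0) :
  forall t1 t2, U (t1, t2) ->
    t1 <> RtoC 0 -> t1 <> RtoC 1 -> t2 <> RtoC 0 -> t2 <> RtoC 1 -> t1 <> t2 ->
    forall k, (k <= 2 * n)%nat ->
      @is_derive C_AbsRing C_NormedModule
        (fun s => wvec n th2 th3 ka rho z k s t2) t1
        (csum (fun j =>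
           (A11 n th3 ka rho k j / (t1 - 1) + A01 n ka rho k j / t1
            + At n th2 ka rho k j / (t1 - t2)) * wvec n th2 th3 ka rho z j t1 t2)
           0 (2 * n)%nat)
      /\
      @is_derive C_AbsRing C_NormedModule
        (fun s => wvec n th2 th3 ka rho z k t1 s) t2
        (csum (fun j =>
           (- At n th2 ka rho k j / (t1 - t2) + A12 n th2 th3 k j / (t2 - 1)
            + A02 n th2 ka rho k j / t2) * wvec n th2 th3 ka rho z j t1 t2)
           0 (2 * n)%nat).
Proof.
  intros t1 t2 Hp H10 H11 H20 H21 H12 k Hk.
  assert (N1 : t1 - 1 <> RtoC 0) by (apply Cneq_sub'; auto).
  assert (N2 : t2 - 1 <> RtoC 0) by (apply Cneq_sub'; auto).
  assert (N12 : t1 - t2 <> RtoC 0) by (apply Cneq_sub'; auto).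
  assert (Hsm : holo_on U (wvec n th2 th3 ka rho z k)) by (apply (Sm_w U hU n th2 th3 ka rho z hn hz hE1 hE2)).
  rewrite (split3 n (fun j => wvec n th2 th3 ka rho z j t1 t2)), (split3' n (fun j => wvec n th2 th3 ka rho z j t1 t2)).
  cbv beta.
  assert (Hcase : k = 0%nat \/ (1 <= k <= n)%nat \/ (exists m, k = (n + m)%nat /\ (1 <= m <= n)%nat)).
  { destruct (Nat.eq_dec k 0) as [->|]. left; auto.
    destruct (Nat.le_gt_cases k n). right; left; lia. right; right. exists (k - n)%nat. lia. }
  split.
  - assert (Hd := gen_d1 U hU (wvec n th2 th3 ka rho z k) t1 t2 (gen_h U _ Hsm) Hp).
    match goal with |- is_derive _ _ ?R => replace R with (D1 (wvec n th2 th3 ka rho z k) t1 t2); [exact Hd|] end.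
    apply (creg' t1); auto.
    change (t1 * D1 (wvec n th2 th3 ka rho z k) t1 t2) with (delta1 (wvec n th2 th3 ka rho z k) t1 t2).
    pose proof (RG U hU n th2 th3 ka rho z hn hz hE1 hE2 t1 t2 Hp) as HRG.
    pose proof (J6 U hU n th2 th3 ka rho z hn hz hE1 hE2 t1 t2 Hp) as HJ6.
    pose proof (RC U hU n th2 th3 ka rho z hn hz hE1 hE2 t1 t2 Hp) as HRC.
    pose proof (J1 U hU n th2 th3 ka rho z hn hz hE1 hE2 t1 t2 Hp) as HJ1.
    pose proof (J2 U hU n th2 th3 ka rho z hn hz hE1 hE2 t1 t2 Hp) as HJ2.
    destruct Hcase as [->|[Hm|[m [-> Hm]]]].
    + rewrite A11_0, A01_0, At_0. cbv beta.
      rewrite (J0 U hU n th2 th3 ka rho z hn hz hE1 hE2 t1 t2 Hp).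
      rewrite HJ1, HJ2, HRG, HJ6, HRC. field. auto.
    + rewrite (A11_m _ _ _ _ _ _ Hm), (A01_m _ _ _ _ _ Hm), (At_m _ _ _ _ _ _ Hm). cbv beta.
      pose proof (ROW1 U hU n th2 th3 ka rho z hn hz hE1 hE2 k t1 t2 Hm Hp) as HR.
      replace (delta1 (wvec n th2 th3 ka rho z k) t1 t2) with
        (kr ka rho k * th3 * delta1 (D.Qn n ka rho z) t1 t2
         - (rho k - rho 1%nat) * wvec n th2 th3 ka rho z k t1 t2
         - kr ka rho k * csum (fun j => wvec n th2 th3 ka rho z j t1 t2) (S k) n) by (rewrite <- HR; ring).
      rewrite HJ1, HRG. field. auto.
    + rewrite (A11_nm _ _ _ _ _ _ Hm), (A01_nm _ _ _ _ _ Hm), (At_nm _ _ _ _ _ _ Hm). cbv beta.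
      pose proof (ROW2 U hU n th2 th3 ka rho z hn hz hE1 hE2 m t1 t2 Hm Hp) as HR.
      replace (delta1 (wvec n th2 th3 ka rho z (n + m)) t1 t2) with
        (- kr ka rho m * delta1 (D.Qn n ka rho (zt th2 z)) t1 t2
         - (rho m - rho 1%nat) * wvec n th2 th3 ka rho z (n + m) t1 t2
         - kr ka rho m * csum (fun j => wvec n th2 th3 ka rho z (n + j) t1 t2) (S m) n) by (rewrite <- HR; ring).
      rewrite HJ2, HJ6, HRC. field. auto.
  - assert (Hd := gen_d2 U hU (wvec n th2 th3 ka rho z k) t1 t2 (gen_h U _ Hsm) Hp).
    match goal with |- is_derive _ _ ?R => replace R with (D2 (wvec n th2 th3 ka rho z k) t1 t2); [exact Hd|] end.
    apply (creg' (t2 - 1)); auto.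
    change ((t2 - 1) * D2 (wvec n th2 th3 ka rho z k) t1 t2) with (delta2 (wvec n th2 th3 ka rho z k) t1 t2).
    pose proof (J7 U hU n th2 th3 ka rho z hn hz hE1 hE2 t1 t2 Hp) as HJ7.
    destruct Hcase as [->|[Hm|[m [-> Hm]]]].
    + rewrite At_0, A12_0, A02_0. cbv beta.
      rewrite (J8 U hU n th2 th3 ka rho z hn hz hE1 hE2 t1 t2 Hp), HJ7. field. auto.
    + rewrite (At_m _ _ _ _ _ _ Hm), (A12_m _ _ _ _ _ Hm), (A02_m _ _ _ _ _ _ Hm). cbv beta.
      rewrite (J9 U hU n th2 th3 ka rho z hn hz hE1 hE2 k t1 t2 Hm Hp). field. auto.
    + rewrite (At_nm _ _ _ _ _ _ Hm), (A12_nm _ _ _ _ _ Hm), (A02_nm _ _ _ _ _ _ Hm). cbv beta.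
      pose proof (J10 U hU n th2 th3 ka rho z hn hz hE1 hE2 m t1 t2 Hm Hp) as HJ10.
      assert (HD : delta2 (wvec n th2 th3 ka rho z (n + m)) t1 t2 =
        ((t2 - 1) * (- th2 * kr ka rho m * wvec n th2 th3 ka rho z 0%nat t1 t2 + th2 * wvec n th2 th3 ka rho z m t1 t2
           - kr ka rho m * csum (fun j => wvec n th2 th3 ka rho z (n + j)%nat t1 t2) 1 (m - 1)
           + (th2 + ka 0%nat - ka m) * wvec n th2 th3 ka rho z (n + m)%nat t1 t2)) / t2
        - (th2 * wvec n th2 th3 ka rho z m t1 t2 - th3 * wvec n th2 th3 ka rho z (n + m)%nat t1 t2 - kr ka rho m * (t2 - 1) * Sop th2 th3 ka rho (D.Pn n ka rho (zt th2 z)) t1 t2)).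
      { apply (creg' t2); auto.
        replace (t2 * delta2 (wvec n th2 th3 ka rho z (n + m)) t1 t2) with
          (t2 * (delta2 (wvec n th2 th3 ka rho z (n + m)%nat) t1 t2 + th2 * wvec n th2 th3 ka rho z m t1 t2 - th3 * wvec n th2 th3 ka rho z (n + m)%nat t1 t2
                 - kr ka rho m * (t2 - 1) * Sop th2 th3 ka rho (D.Pn n ka rho (zt th2 z)) t1 t2)
           - t2 * (th2 * wvec n th2 th3 ka rho z m t1 t2 - th3 * wvec n th2 th3 ka rho z (n + m)%nat t1 t2 - kr ka rho m * (t2 - 1) * Sop th2 th3 ka rho (D.Pn n ka rho (zt th2 z)) t1 t2)) by ring.
        rewrite HJ10. field. auto. }
      rewrite HD, HJ7. field. auto.
Qed.
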